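(* Let $P_{2m}(\boldsymbol\lambda)$ be a parallel Eulerian graph with $m\ge1$, and let all edges have activation probability $p\in(0,1]$. Then for every edge $e$, the expected time for the uniform Eulerian strategy to traverse $e$ equals $$\frac{\theta(P_{2m}(\boldsymbol\lambda))+p^{-1}}{2}+\Phi_m.$$ Consequently, $\mathrm{val}(p)\le \frac{\theta(P_{2m}(\boldsymbol\lambda))+p^{-1}}{2}+\Phi_m$.
   Context: Setting: the stochastic search game. Every edge has length $1$ and is active at each stage independently with probability $p$. The hider chooses an edge and stays there. The searcher starts at the root; at each stage, knowing which edges are currently active, she waits or traverses an active edge incident to her position. The hider's payoff is the expected first time the searcher traverses his edge. $\mathrm{val}(p)$ is the value. Parallel graph $P_n(\boldsymbol\lambda)$, with $\boldsymbol\lambda=(\lambda_1,\dots,\lambda_n)$ positive integers: two vertices $O$ (the root) and $D$ joined by $n$ internally vertex-disjoint paths, the $i$-th having $\lambda_i$ edges. When $n=2m$ is even it is Eulerian, and is called a parallel Eulerian graph. Uniform Eulerian strategy: - at $O$ (respectively $D$), wait until at least one untraversed path edge incident to the current vertex is active, then choose uniformly among those active untraversed edges; - then follow the chosen path straight to the other endpoint, waiting whenever the next edge is inactive; - repeat until all edges are traversed. Cycle time: $\theta(P_{2m}(\boldsymbol\lambda))=\sum_{k=1}^{2m}\Big(\frac1{1-(1-p)^k}+\frac{\lambda_k-1}{p}\Big)$. $\Phi_m$ is defined recursively by $\Phi_1=\frac12\big(\frac1{1-(1-p)^2}-\frac1p\big)$ and, for $m>1$, $$\Phi_m=\frac12\frac1{1-(1-p)^{2m}}+\Big(\frac12-\frac1{2m}\Big)\frac1{1-(1-p)^{2m-1}}-\frac1{2m}\Big(\sum_{k=1}^{2(m-1)}\frac1{1-(1-p)^k}+\frac1p\Big)+\frac{m-1}{m}\Phi_{m-1}.$$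 *)

(* Defs.v *)
From Stdlib Require Import Reals List Arith Bool ClassicalEpsilon.
Import ListNotations.
Open Scope R_scope.

(** * The parallel graph P_n(lam)
    lam : list nat, path i (0 <= i < length lam) has (nth i lam 0) edges.
    Vertices: O (root), D, and internal vertices VI i j (0 < j < lam_i).
    Edge (i,j), j < lam_i, joins  pt i j  and  pt i (j+1). *)
Inductive vtx := VO | VD | VI (i j : nat).

Definition vtx_eqb (u v : vtx) : bool :=
  match u, v with
  | VO, VO => true
  | VD, VD => true
  | VI i j, VI k l => Nat.eqb i k && Nat.eqb j l
  | _, _ => false
  end.

Definition edge := (nat * nat)%type.
Definition edge_eqb (e f : edge) : bool :=
  Nat.eqb (fst e) (fst f) && Nat.eqb (snd e) (snd f).
Definition memb (e : edge) (l : list edge) : bool := existsb (edge_eqb e) l.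

Definition len (lam : list nat) (i : nat) : nat := nth i lam 0%nat.

Definition pt (lam : list nat) (i j : nat) : vtx :=
  if Nat.eqb j 0 then VO else if Nat.eqb j (len lam i) then VD else VI i j.
Definition src lam (e : edge) : vtx := pt lam (fst e) (snd e).
Definition tgt lam (e : edge) : vtx := pt lam (fst e) (S (snd e)).

Definition edges (lam : list nat) : list edge :=
  flat_map (fun i => map (fun j => (i, j)) (seq 0 (len lam i))) (seq 0 (length lam)).

Definition incident lam (v : vtx) (e : edge) : bool :=
  vtx_eqb v (src lam e) || vtx_eqb v (tgt lam e).

Definition cross lam (v : vtx) (e : edge) : vtx :=
  if vtx_eqb v (src lam e) then tgt lam e
  else if vtx_eqb v (tgt lam e) then src lam e else v.

(** * Random activation at one stage: every edge independently active with
    probability p.  List of (set of active edges, probability). *)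
Fixpoint patterns (p : R) (l : list edge) : list (list edge * R) :=
  match l with
  | [] => [([], 1)]
  | e :: l' =>
      map (fun aw => (e :: fst aw, p * snd aw)) (patterns p l')
      ++ map (fun aw => (fst aw, (1 - p) * snd aw)) (patterns p l')
  end.

Inductive move := Wait | Go (e : edge).

(** history (chronological): at each past stage, the active set and the move *)
Definition history := list (list edge * move).

(** a (behaviour) strategy: given history and the current active set,
    a finite distribution (weight, move) *)
Definition strategy := history -> list edge -> list (R * move).

Definition position lam (h : history) : vtx :=
  fold_left (fun v am => match snd am with Wait => v | Go e => cross lam v e end) h VO.

Definition traversed (h : history) (e : edge) : bool :=
  existsb (fun am => match snd am with Go f => edge_eqb f e | Wait => false end) h.

Definition legal lam (v : vtx) (A : list edge) (mv : move) : bool :=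
  match mv with
  | Wait => true
  | Go e => memb e (edges lam) && memb e A && incident lam v e
  end.

Definition sumR (l : list R) : R := fold_right Rplus 0 l.

Definition valid_strategy lam (sg : strategy) : Prop :=
  forall h A,
    (forall wm, In wm (sg h A) -> 0 <= fst wm /\ legal lam (position lam h) A (snd wm) = true)
    /\ sumR (map fst (sg h A)) = 1.

Fixpoint dist lam (p : R) (sg : strategy) (t : nat) : list (history * R) :=
  match t with
  | O => [([], 1)]
  | S t' =>
      flat_map (fun hw =>
        flat_map (fun aw =>
          map (fun wm => (fst hw ++ [(fst aw, snd wm)], snd hw * snd aw * fst wm))
              (sg (fst hw) (fst aw)))
          (patterns p (edges lam)))
        (dist lam p sg t')
  end.

(** P(T_e > t): probability that e is not traversed during stages 1..t *)
Definition tail lam p sg (e : edge) (t : nat) : R :=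
  sumR (map (fun hw => if traversed (fst hw) e then 0 else snd hw) (dist lam p sg t)).

(** the expected first traversal time of e equals X
    (tail-sum formula E[T] = sum_{t>=0} P(T > t)) *)
Definition exp_time lam p sg (e : edge) (X : R) : Prop :=
  infinite_sum (tail lam p sg e) X.

Fixpoint last_go (h : history) : option edge :=
  match h with
  | [] => None
  | am :: h' =>
      match last_go h' with
      | Some e => Some e
      | None => match snd am with Go e => Some e | Wait => None end
      end
  end.

Definition uniform_eulerian (lam : list nat) : strategy :=
  fun h A =>
    match position lam h with
    | VI i j =>
        (* follow the path straight on: continue in the direction of travel *)
        let nxt : edge :=
          match last_go h with
          | Some (_, l) => if Nat.eqb l j then (i, Nat.pred j) else (i, j)
          | None => (i, j)
          end in
        if memb nxt A then [(1, Go nxt)] else [(1, Wait)]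
    | v =>
        let c := filter (fun e => incident lam v e && memb e A && negb (traversed h e))
                        (edges lam) in
        match c with
        | [] => [(1, Wait)]
        | _ => map (fun e => (/ INR (length c), Go e)) c
        end
    end.

Definition theta (p : R) (lam : list nat) : R :=
  sumR (map (fun i => / (1 - (1 - p) ^ (S i)) + (INR (len lam i) - 1) / p)
            (seq 0 (length lam))).

Fixpoint Phi (p : R) (m : nat) : R :=
  match m with
  | O => 0
  | S m' =>
      match m' with
      | O => / 2 * (/ (1 - (1 - p) ^ 2) - / p)
      | S _ =>
          let M := INR m in
          / 2 * / (1 - (1 - p) ^ (2 * m))
          + (/ 2 - / (2 * M)) * / (1 - (1 - p) ^ (2 * m - 1))
          - / (2 * M) * (sumR (map (fun k => / (1 - (1 - p) ^ k)) (seq 1 (2 * (m - 1))))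
                         + / p)
          + (M - 1) / M * Phi p m'
      end
  end.

(** * Value of the game: inf over searcher strategies of the max over
    hider edges of the expected traversal time. *)
Definition guarantees lam p (M : R) : Prop :=
  exists sg, valid_strategy lam sg /\
    forall e, In e (edges lam) -> exists E, exp_time lam p sg e E /\ E <= M.

Definition is_glb (E : R -> Prop) (v : R) : Prop :=
  (forall x, E x -> v <= x) /\ (forall y, (forall x, E x -> y <= x) -> y <= v).

Definition val (lam : list nat) (p : R) : R :=
  epsilon (inhabits 0) (is_glb (guarantees lam p)).

(* Main.v *)
Require Import Defs.
From Stdlib Require Import Reals List.
From Stdlib Require Import Lra Lia Bool Arith FunctionalExtensionality Permutation ClassicalEpsilon.
Import ListNotations.
Open Scope R_scope.

Lemma sumR_nil : sumR [] = 0. Proof. reflexivity. Qed.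
Lemma sumR_cons a l : sumR (a :: l) = a + sumR l. Proof. reflexivity. Qed.
Lemma sumR_app l1 l2 : sumR (l1 ++ l2) = sumR l1 + sumR l2.
Proof. induction l1 as [|a l IH]; simpl app; rewrite ?sumR_cons, ?sumR_nil; [lra|rewrite IH; lra]. Qed.
Lemma sumR_map_ext {A} (f g : A -> R) l : (forall x, In x l -> f x = g x) -> sumR (map f l) = sumR (map g l).
Proof. intros H; induction l as [|a l IH]; simpl map; rewrite ?sumR_cons; auto.
  rewrite H by (left; auto). rewrite IH; auto. intros; apply H; right; auto. Qed.
Lemma sumR_map_plus {A} (f g : A -> R) l : sumR (map (fun x => f x + g x) l) = sumR (map f l) + sumR (map g l).
Proof. induction l as [|a l IH]; simpl map; rewrite ?sumR_cons, ?sumR_nil; [lra|rewrite IH; lra]. Qed.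
Lemma sumR_map_scal {A} c (f : A -> R) l : sumR (map (fun x => c * f x) l) = c * sumR (map f l).
Proof. induction l as [|a l IH]; simpl map; rewrite ?sumR_cons, ?sumR_nil; [lra|rewrite IH; lra]. Qed.
Lemma sumR_map_scalr {A} c (f : A -> R) l : sumR (map (fun x => f x * c) l) = sumR (map f l) * c.
Proof. induction l as [|a l IH]; simpl map; rewrite ?sumR_cons, ?sumR_nil; [lra|rewrite IH; lra]. Qed.
Lemma sumR_map_zero {A} (f : A -> R) l : (forall x, In x l -> f x = 0) -> sumR (map f l) = 0.
Proof. intros H. rewrite (sumR_map_ext f (fun _ => 0)) by auto.
  induction l; simpl map; rewrite ?sumR_cons, ?sumR_nil; auto. rewrite IHl; [lra|intros; apply H; right; auto]. Qed.
Lemma sumR_flat_map {A B} (f : B -> R) (g : A -> list B) l :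
  sumR (map f (flat_map g l)) = sumR (map (fun x => sumR (map f (g x))) l).
Proof. induction l as [|a l IH]; simpl; auto. rewrite map_app, sumR_app, IH. reflexivity. Qed.

Record st := mkst { spos : vtx; slg : option edge; str : edge -> bool }.
Definition state lam (h : history) := mkst (position lam h) (last_go h) (traversed h).
Definition nxt lam (s : st) (mv : move) : st :=
  match mv with
  | Wait => s
  | Go e => mkst (cross lam (spos s) e) (Some e) (fun f => str s f || edge_eqb e f)
  end.

Lemma last_go_app h A mv : last_go (h ++ [(A, mv)]) =
  match mv with Go e => Some e | Wait => last_go h end.
Proof. induction h as [|a h IH]; simpl. destruct mv; reflexivity.
  rewrite IH. destruct mv; auto. Qed.

Lemma state_app lam h A mv : state lam (h ++ [(A, mv)]) = nxt lam (state lam h) mv.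
Proof. unfold state, nxt. rewrite last_go_app.
  assert (Hp : position lam (h ++ [(A, mv)]) = match mv with Wait => position lam h | Go e => cross lam (position lam h) e end).
  { unfold position. rewrite fold_left_app. reflexivity. }
  assert (Ht : traversed (h ++ [(A, mv)]) = fun f => traversed h f || match mv with Go g => edge_eqb g f | Wait => false end).
  { apply functional_extensionality; intro f. unfold traversed. rewrite existsb_app. simpl. rewrite orb_false_r. reflexivity. }
  rewrite Hp, Ht. destruct mv; simpl; auto. f_equal. apply functional_extensionality; intro; apply orb_false_r. Qed.

Definition Sst := st -> list edge -> list (R * move).
Definition stepS lam p (sg : Sst) (G : st -> R) (s : st) : R :=
  sumR (map (fun aw => snd aw * sumR (map (fun wm => fst wm * G (nxt lam s (snd wm))) (sg s (fst aw))))
    (patterns p (edges lam))).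
Fixpoint TL lam p sg e t s : R :=
  match t with O => if str s e then 0 else 1 | S t' => stepS lam p sg (TL lam p sg e t') s end.
Fixpoint SN lam p sg e N s : R :=
  match N with O => 0 | S N' => SN lam p sg e N' s + TL lam p sg e N' s end.

Lemma stepS_ext lam p sg G1 G2 s : (forall mv, G1 (nxt lam s mv) = G2 (nxt lam s mv)) ->
  stepS lam p sg G1 s = stepS lam p sg G2 s.
Proof. intros H. unfold stepS. apply sumR_map_ext; intros aw _. f_equal.
  apply sumR_map_ext; intros wm _. rewrite H; auto. Qed.
Lemma stepS_ext_sg lam p sg1 sg2 G s : (forall A, sg1 s A = sg2 s A) ->
  stepS lam p sg1 G s = stepS lam p sg2 G s.
Proof. intros H. unfold stepS. apply sumR_map_ext; intros aw _. rewrite H; auto. Qed.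
Lemma stepS_plus lam p sg G1 G2 s :
  stepS lam p sg (fun x => G1 x + G2 x) s = stepS lam p sg G1 s + stepS lam p sg G2 s.
Proof. unfold stepS. rewrite <- sumR_map_plus. apply sumR_map_ext; intros aw _.
  rewrite <- Rmult_plus_distr_l, <- sumR_map_plus. f_equal. apply sumR_map_ext; intros; ring. Qed.
Lemma stepS_zero lam p sg G s : (forall mv, G (nxt lam s mv) = 0) -> stepS lam p sg G s = 0.
Proof. intros H. unfold stepS. apply sumR_map_zero; intros aw _.
  rewrite sumR_map_zero; [ring|]. intros wm _; rewrite H; ring. Qed.

Lemma nxt_str lam s mv e : str s e = true -> str (nxt lam s mv) e = true.
Proof. intros H; destruct mv; simpl; auto. rewrite H; auto. Qed.
Lemma TL_trav lam p sg e t : forall s, str s e = true -> TL lam p sg e t s = 0.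
Proof. induction t; intros s H; simpl. rewrite H; auto.
  apply stepS_zero. intros mv; apply IHt, nxt_str, H. Qed.
Lemma SN_trav lam p sg e N s : str s e = true -> SN lam p sg e N s = 0.
Proof. intros H; induction N; simpl; auto. rewrite IHN, TL_trav; auto; ring. Qed.
Lemma SN_rec lam p sg e N : forall s, SN lam p sg e (S N) s =
  (if str s e then 0 else 1) + stepS lam p sg (SN lam p sg e N) s.
Proof. induction N; intros s.
  - simpl. rewrite stepS_zero by (intros; reflexivity). ring.
  - change (SN lam p sg e (S (S N)) s) with (SN lam p sg e (S N) s + TL lam p sg e (S N) s).
    rewrite IHN. simpl TL. rewrite Rplus_assoc, <- stepS_plus. f_equal. Qed.

Definition stepH lam p (sg : strategy) (G : history -> R) (h : history) : R :=
  sumR (map (fun aw => snd aw * sumR (map (fun wm => fst wm * G (h ++ [(fst aw, snd wm)])) (sg h (fst aw))))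
    (patterns p (edges lam))).
Lemma dist_step lam p sg t G :
  sumR (map (fun hw => snd hw * G (fst hw)) (Defs.dist lam p sg (S t))) =
  sumR (map (fun hw => snd hw * stepH lam p sg G (fst hw)) (Defs.dist lam p sg t)).
Proof. simpl Defs.dist. rewrite sumR_flat_map. apply sumR_map_ext; intros hw _.
  unfold stepH. rewrite sumR_flat_map, <- sumR_map_scal. apply sumR_map_ext; intros aw _.
  rewrite map_map, <- Rmult_assoc, <- sumR_map_scal. apply sumR_map_ext; intros wm _. simpl. rewrite Rmult_assoc. reflexivity. Qed.
Fixpoint itr lam p sg t (G : history -> R) : history -> R :=
  match t with O => G | S t' => itr lam p sg t' (stepH lam p sg G) end.
Lemma dist_itr lam p sg t : forall G,
  sumR (map (fun hw => snd hw * G (fst hw)) (Defs.dist lam p sg t)) = itr lam p sg t G [].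
Proof. induction t; intros G. simpl. unfold sumR; simpl. ring.
  rewrite dist_step, IHt. reflexivity. Qed.
Lemma stepH_ext lam p sg G1 G2 h : (forall h', G1 h' = G2 h') -> stepH lam p sg G1 h = stepH lam p sg G2 h.
Proof. intros H. unfold stepH. apply sumR_map_ext; intros aw _. f_equal.
  apply sumR_map_ext; intros wm _. rewrite H; auto. Qed.
Lemma itr_comm lam p sg t : forall G h, itr lam p sg t (stepH lam p sg G) h = stepH lam p sg (itr lam p sg t G) h.
Proof. induction t; intros G h; simpl; auto. Qed.
Lemma itr_TL lam p (sg : strategy) (ss : Sst) e :
  (forall h A, sg h A = ss (state lam h) A) ->
  forall t h, itr lam p sg t (fun h => if traversed h e then 0 else 1) h = TL lam p ss e t (state lam h).
Proof. intros Hs t; induction t; intros h. reflexivity.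
  change (itr lam p sg (S t) ?G h) with (itr lam p sg t (stepH lam p sg G) h).
  rewrite itr_comm. unfold stepH. simpl TL. unfold stepS. apply sumR_map_ext; intros aw _.
  rewrite Hs. f_equal. apply sumR_map_ext; intros wm _. rewrite IHt, state_app. reflexivity. Qed.

Lemma tail_TL lam p (sg : strategy) (ss : Sst) e :
  (forall h A, sg h A = ss (state lam h) A) ->
  forall t, Defs.tail lam p sg e t = TL lam p ss e t (state lam []).
Proof. intros Hs t. unfold Defs.tail. rewrite <- (itr_TL lam p sg ss e Hs t []). rewrite <- dist_itr.
  apply sumR_map_ext; intros hw _. destruct (traversed (fst hw) e); ring. Qed.

Lemma sum_tail_SN lam p (sg : strategy) (ss : Sst) e :
  (forall h A, sg h A = ss (state lam h) A) ->
  forall N, sum_f_R0 (Defs.tail lam p sg e) N = SN lam p ss e (S N) (state lam []).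
Proof. intros Hs N; induction N. simpl. rewrite (tail_TL _ _ _ ss) by auto. rewrite Rplus_0_l. reflexivity.
  simpl sum_f_R0. rewrite IHN. rewrite (tail_TL _ _ _ ss) by auto. reflexivity. Qed.

Lemma edge_eqb_spec x y : edge_eqb x y = true <-> x = y.
Proof. destruct x as [a b], y as [c d]; unfold edge_eqb; simpl.
  rewrite andb_true_iff, !Nat.eqb_eq. split; [intros [-> ->]; auto | intros H; inversion H; auto]. Qed.
Lemma edge_eqb_refl x : edge_eqb x x = true. Proof. apply edge_eqb_spec; auto. Qed.
Lemma edge_eqb_neq x y : x <> y -> edge_eqb x y = false.
Proof. intros H. destruct (edge_eqb x y) eqn:E; auto. apply edge_eqb_spec in E; contradiction. Qed.
Lemma edge_eq_dec (x y : edge) : {x = y} + {x <> y}.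
Proof. decide equality; apply Nat.eq_dec. Qed.

Definition upd (s : edge -> bool) (e : edge) : edge -> bool := fun x => edge_eqb x e || s x.
Fixpoint ExE (p : R) (L : list edge) (s : edge -> bool) (F : (edge -> bool) -> R) : R :=
  match L with
  | [] => F s
  | e :: L' => p * ExE p L' (upd s e) F + (1 - p) * ExE p L' s F
  end.

Lemma patterns_ExE p L : forall s F,
  sumR (map (fun aw => snd aw * F (fun x => memb x (fst aw) || s x)) (patterns p L)) = ExE p L s F.
Proof. induction L as [|e L IH]; intros s F; simpl.
  - unfold sumR; simpl. rewrite Rmult_1_l, Rplus_0_r. reflexivity.
  - rewrite map_app, sumR_app, !map_map. simpl. rewrite <- IH, <- IH.
    rewrite <- !sumR_map_scal. f_equal; apply sumR_map_ext; intros aw _.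
    + rewrite Rmult_assoc. f_equal. f_equal. f_equal.
      apply functional_extensionality; intros x. unfold upd, memb. simpl.
      destruct (edge_eqb x e), (existsb (edge_eqb x) (fst aw)), (s x); auto.
    + ring. Qed.

Lemma ExE_ext p L : forall s F F', (forall s', (forall x, ~ In x L -> s' x = s x) -> F s' = F' s') ->
  ExE p L s F = ExE p L s F'.
Proof. induction L as [|e L IH]; intros s F F' H; simpl. apply H; auto.
  f_equal; f_equal; apply IH; intros s' Hs'; apply H; intros x Hx.
  - rewrite Hs' by (intro; apply Hx; right; auto). unfold upd.
    rewrite edge_eqb_neq; auto. intro; apply Hx; left; auto.
  - apply Hs'. intro; apply Hx; right; auto. Qed.
Lemma ExE_pt p L s F F' : (forall s', F s' = F' s') -> ExE p L s F = ExE p L s F'.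
Proof. intros H; apply ExE_ext; auto. Qed.
Lemma ExE_const p L : forall s c, ExE p L s (fun _ => c) = c.
Proof. induction L; intros; simpl; auto. rewrite !IHL; ring. Qed.
Lemma ExE_plus p L : forall s F G, ExE p L s (fun x => F x + G x) = ExE p L s F + ExE p L s G.
Proof. induction L; intros; simpl; auto. rewrite !IHL; ring. Qed.
Lemma ExE_scal p L : forall s c F, ExE p L s (fun x => c * F x) = c * ExE p L s F.
Proof. induction L; intros; simpl; auto. rewrite !IHL; ring. Qed.
Lemma ExE_sum {A} p L s (phi : A -> (edge -> bool) -> R) K :
  ExE p L s (fun x => sumR (map (fun f => phi f x) K)) = sumR (map (fun f => ExE p L s (phi f)) K).
Proof. induction K as [|a K IH]; simpl map. rewrite sumR_nil; apply ExE_const.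
  rewrite sumR_cons. rewrite (ExE_pt p L s _ (fun x => phi a x + sumR (map (fun f => phi f x) K))).
  rewrite ExE_plus, IH. reflexivity. intros; rewrite sumR_cons; auto. Qed.

Definition cnt (K : list edge) (s : edge -> bool) : nat := length (filter s K).
Lemma cnt_cons k K s : cnt (k :: K) s = ((if s k then 1 else 0) + cnt K s)%nat.
Proof. unfold cnt; simpl; destruct (s k); auto. Qed.
Lemma cnt_split K1 k K2 s : cnt (K1 ++ k :: K2) s = ((if s k then 1 else 0) + cnt (K1 ++ K2) s)%nat.
Proof. unfold cnt. rewrite !filter_app, !length_app. simpl. destruct (s k); simpl; lia. Qed.

Fixpoint W (p : R) (n : nat) (h : nat -> R) : R :=
  match n with O => h O | S n' => p * W p n' (fun k => h (S k)) + (1 - p) * W p n' h end.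
Lemma W_ext p n : forall h h', (forall k, h k = h' k) -> W p n h = W p n h'.
Proof. induction n; intros h h' H; simpl; auto. rewrite (IHn _ (fun k => h' (S k))), (IHn h h'); auto. Qed.
Lemma W_const p n : forall c, W p n (fun _ => c) = c.
Proof. induction n; intros; simpl; auto. rewrite !IHn; ring. Qed.

Lemma incl_tl_neq (k : edge) K L : incl K (k :: L) -> ~ In k K -> incl K L.
Proof. intros H Hk x Hx. destruct (H x Hx); subst; auto. contradiction. Qed.

Lemma E3 p L : forall s K h, NoDup L -> NoDup K -> incl K L -> (forall x, In x K -> s x = false) ->
  ExE p L s (fun s' => h (cnt K s')) = W p (length K) h.
Proof. induction L as [|k L IH]; intros s K h HL HK Hinc Hs.
  - destruct K as [|a K]. reflexivity. exfalso; apply (Hinc a); left; auto.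
  - inversion HL as [|k' L' HkL HL']; subst. simpl ExE.
    destruct (in_dec edge_eq_dec k K) as [Hin|Hnin].
    + destruct (in_split _ _ Hin) as [K1 [K2 ->]].
      assert (HK' : NoDup (K1 ++ K2)) by (eapply NoDup_remove_1; eauto).
      assert (HkK : ~ In k (K1 ++ K2)) by (eapply NoDup_remove_2; eauto).
      assert (Hinc' : incl (K1 ++ K2) L).
      { intros x Hx. assert (In x (K1 ++ k :: K2)) by (apply in_app_or in Hx; apply in_or_app; destruct Hx; [left|right;right]; auto).
        destruct (Hinc x H); subst; auto. contradiction. }
      assert (Hs' : forall x, In x (K1 ++ K2) -> s x = false).
      { intros x Hx; apply Hs. apply in_app_or in Hx; apply in_or_app; destruct Hx; [left|right;right]; auto. }
      rewrite length_app; simpl; rewrite Nat.add_succ_r, <- length_app. simpl W.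
      rewrite (ExE_ext p L _ _ (fun s' => (fun n => h (S n)) (cnt (K1 ++ K2) s'))).
      rewrite (ExE_ext p L s _ (fun s' => h (cnt (K1 ++ K2) s'))).
      rewrite <- (IH (upd s k) (K1++K2) (fun n => h (S n))), <- (IH s (K1 ++ K2) h); auto.
      * intros x Hx; unfold upd. rewrite edge_eqb_neq, Hs'; auto. intro; subst; contradiction.
      * intros s' Hs''. rewrite cnt_split, Hs''; auto. rewrite Hs; auto; apply in_or_app; right; left; auto.
      * intros s' Hs''. rewrite cnt_split, Hs''; auto. unfold upd. rewrite edge_eqb_refl. reflexivity.
    + assert (Hinc' : incl K L) by (eapply incl_tl_neq; eauto).
      rewrite !IH; auto. ring.
      intros x Hx; unfold upd. rewrite edge_eqb_neq, Hs; auto. intro; subst; contradiction. Qed.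

Lemma E4 p L : forall s K c f, NoDup L -> NoDup K -> incl K L -> (forall x, In x K -> s x = false) -> In f K ->
  ExE p L s (fun s' => if s' f then / (c + INR (cnt K s')) else 0) =
  p * W p (pred (length K)) (fun n => / (c + 1 + INR n)).
Proof. induction L as [|k L IH]; intros s K c f HL HK Hinc Hs Hf.
  - exfalso; apply (Hinc f); auto.
  - inversion HL as [|k' L' HkL HL']; subst. simpl ExE.
    destruct (in_dec edge_eq_dec k K) as [Hin|Hnin].
    + destruct (in_split _ _ Hin) as [K1 [K2 ->]].
      assert (HK' : NoDup (K1 ++ K2)) by (eapply NoDup_remove_1; eauto).
      assert (HkK : ~ In k (K1 ++ K2)) by (eapply NoDup_remove_2; eauto).
      assert (Hinc' : incl (K1 ++ K2) L).
      { intros x Hx. assert (In x (K1 ++ k :: K2)) by (apply in_app_or in Hx; apply in_or_app; destruct Hx; [left|right;right]; auto).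
        destruct (Hinc x H); subst; auto. contradiction. }
      assert (Hs' : forall x, In x (K1 ++ K2) -> s x = false).
      { intros x Hx; apply Hs. apply in_app_or in Hx; apply in_or_app; destruct Hx; [left|right;right]; auto. }
      assert (Hsk : s k = false) by (apply Hs; apply in_or_app; right; left; auto).
      assert (Hs1 : forall x, In x (K1 ++ K2) -> upd s k x = false).
      { intros x Hx; unfold upd. rewrite edge_eqb_neq, Hs'; auto. intro; subst; contradiction. }
      rewrite length_app; simpl; rewrite Nat.add_succ_r, <- length_app, Nat.pred_succ.
      destruct (edge_eq_dec f k) as [->|Hfk].
      * rewrite (ExE_ext p L _ _ (fun s' => (fun n => / (c + 1 + INR n)) (cnt (K1 ++ K2) s'))).
        rewrite (ExE_ext p L s _ (fun _ => 0)). rewrite <- (E3 p L (upd s k) (K1 ++ K2) (fun n => / (c + 1 + INR n))), ExE_const; auto.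
        rewrite Rmult_0_r, Rplus_0_r. reflexivity.
        -- intros s' Hs''. rewrite Hs''; auto. rewrite Hsk; auto.
        -- intros s' Hs''. rewrite Hs''; auto. unfold upd; rewrite edge_eqb_refl. simpl.
           rewrite cnt_split, Hs'' by auto. unfold upd; rewrite edge_eqb_refl, orb_true_l.
           change ((1 + ?n)%nat) with (S n). rewrite S_INR. f_equal. ring.
      * assert (Hf' : In f (K1 ++ K2)).
        { apply in_app_or in Hf; apply in_or_app; destruct Hf as [H|[H|H]]; auto. subst; contradiction. }
        rewrite (ExE_ext p L _ _ (fun s' => if s' f then / ((c + 1) + INR (cnt (K1 ++ K2) s')) else 0)).
        rewrite (ExE_ext p L s _ (fun s' => if s' f then / (c + INR (cnt (K1 ++ K2) s')) else 0)).
        rewrite IH, IH; auto.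
        destruct (length (K1 ++ K2)) as [|n] eqn:Hn.
        { destruct (K1 ++ K2); [contradiction|discriminate]. }
        simpl pred. cbn [W].
        rewrite (W_ext p n (fun k0 => / (c + 1 + INR (S k0))) (fun n0 => / (c + 1 + 1 + INR n0))). ring.
        intros; rewrite S_INR; f_equal; ring.
        -- intros s' Hs''. rewrite cnt_split, (Hs'' k), Hsk by auto. reflexivity.
        -- intros s' Hs''. rewrite cnt_split, (Hs'' k) by auto. unfold upd; rewrite edge_eqb_refl, orb_true_l.
           change ((1 + ?n)%nat) with (S n). rewrite S_INR. destruct (s' f); auto. f_equal. ring.
    + assert (Hinc' : incl K L) by (eapply incl_tl_neq; eauto).
      rewrite !IH; auto. ring.
      intros x Hx; unfold upd. rewrite edge_eqb_neq, Hs; auto. intro; subst; contradiction. Qed.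

Lemma W_ind0 p n : W p n (fun k => if (k =? 0)%nat then 1 else 0) = (1 - p) ^ n.
Proof. induction n; simpl; auto.
  rewrite W_const, IHn. ring. Qed.
Lemma W_ind1 p n : W p n (fun k => if (k =? 0)%nat then 0 else 1) = 1 - (1 - p) ^ n.
Proof. induction n; simpl; [ring|].
  rewrite W_const, IHn. ring. Qed.
Lemma sum_ind (K : list edge) (s : edge -> bool) (a : R) : sumR (map (fun f => if s f then a else 0) K) = INR (cnt K s) * a.
Proof. induction K as [|k K IH]; simpl map. rewrite sumR_nil; simpl; ring.
  rewrite sumR_cons, IH, cnt_cons. destruct (s k); simpl plus; [rewrite S_INR|]; ring. Qed.
Lemma sum_const {A} (K : list A) c : sumR (map (fun _ => c) K) = INR (length K) * c.
Proof. induction K; simpl map. rewrite sumR_nil; simpl; ring. rewrite sumR_cons, IHK. simpl length. rewrite S_INR; ring. Qed.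
Lemma cnt0 K s : cnt K s = 0%nat -> forall f, In f K -> s f = false.
Proof. unfold cnt; intros H f Hf. destruct (s f) eqn:E; auto.
  assert (In f (filter s K)) by (apply filter_In; auto). destruct (filter s K); [contradiction|discriminate]. Qed.

Definition piK p (K : list edge) := p * W p (pred (length K)) (fun n => / (0 + 1 + INR n)).

Lemma piK_eq p L s K : NoDup L -> NoDup K -> incl K L -> (forall x, In x K -> s x = false) -> K <> [] ->
  INR (length K) * piK p K = 1 - (1 - p) ^ length K.
Proof. intros HL HK Hinc Hs Hne.
  assert (H1 : ExE p L s (fun s' => sumR (map (fun f => if s' f then / (0 + INR (cnt K s')) else 0) K)) = INR (length K) * piK p K).
  { rewrite ExE_sum. rewrite (sumR_map_ext _ (fun _ => piK p K)). apply sum_const.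
    intros f Hf. unfold piK. apply E4; auto. }
  rewrite <- H1. rewrite (ExE_pt p L s _ (fun s' => (fun n => if (n =? 0)%nat then 0 else 1) (cnt K s'))).
  rewrite <- (W_ind1 p (length K)). apply (E3 p L s K (fun n => if (n =? 0)%nat then 0 else 1)); auto.
  intros s'. rewrite sum_ind. destruct (cnt K s') eqn:E. simpl. ring.
  change (S n =? 0)%nat with false. cbv iota. rewrite Rplus_0_l. field.
  apply not_0_INR; discriminate. Qed.

Lemma ExE_bit p L s f x y : NoDup L -> In f L -> s f = false ->
  ExE p L s (fun s' => if s' f then x else y) = p * x + (1 - p) * y.
Proof. intros HL Hf Hs.
  rewrite (ExE_pt p L s _ (fun s' => (fun n => if (n =? 0)%nat then y else x) (cnt [f] s'))).
  rewrite (E3 p L s [f] (fun n => if (n =? 0)%nat then y else x)); auto; try (simpl; ring).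
  constructor; auto; constructor.
  intros z [<-|[]]; auto. intros z [<-|[]]; auto.
  intros s'. unfold cnt; simpl. destruct (s' f); auto. Qed.

Lemma ExE_end p L s K a (b : edge -> R) : NoDup L -> NoDup K -> incl K L -> (forall x, In x K -> s x = false) -> K <> [] ->
  ExE p L s (fun s' => if (cnt K s' =? 0)%nat then a else
     sumR (map (fun f => (if s' f then / INR (cnt K s') else 0) * b f) K)) =
  (1 - p) ^ length K * a + piK p K * sumR (map b K).
Proof. intros HL HK Hinc Hs Hne.
  rewrite (ExE_pt p L s _ (fun s' => a * (fun n => if (n =? 0)%nat then 1 else 0) (cnt K s') +
     sumR (map (fun f => b f * (if s' f then / (0 + INR (cnt K s')) else 0)) K))).
  - rewrite ExE_plus, ExE_scal, (E3 p L s K (fun n => if (n =? 0)%nat then 1 else 0)), W_ind0, ExE_sum; auto.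
    rewrite (sumR_map_ext _ (fun f => b f * piK p K)). rewrite sumR_map_scalr. ring.
    intros f Hf. rewrite ExE_scal. unfold piK. rewrite E4; auto.
  - intros s'. destruct (cnt K s') eqn:E.
    + simpl. rewrite sumR_map_zero. ring. intros f Hf. rewrite (cnt0 K s' E f Hf). ring.
    + change (S n =? 0)%nat with false. cbv iota. rewrite Rmult_0_r, Rplus_0_l. apply sumR_map_ext. intros f _. rewrite Rplus_0_l. ring. Qed.

Lemma In_edges lam i j : In (i, j) (edges lam) <-> (i < length lam)%nat /\ (j < len lam i)%nat.
Proof. unfold edges. rewrite in_flat_map. split.
  - intros [x [Hx Hy]]. apply in_map_iff in Hy. destruct Hy as [y [Hy Hy']]. inversion Hy; subst.
    apply in_seq in Hx, Hy'. lia.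
  - intros [H1 H2]. exists i. split. apply in_seq; lia. apply in_map_iff. exists j; split; auto. apply in_seq; lia. Qed.

Lemma NoDup_edges lam : NoDup (edges lam).
Proof. unfold edges. generalize (seq_NoDup (length lam) 0). generalize (seq 0 (length lam)).
  induction l as [|x l IH]; intros Hl; simpl. constructor.
  inversion Hl; subst. apply NoDup_app; auto.
  - apply NoDup_map_NoDup_ForallPairs. intros a b _ _ H; inversion H; auto. apply seq_NoDup.
  - intros a Ha Hb. apply in_map_iff in Ha. destruct Ha as [j [<- _]].
    apply in_flat_map in Hb. destruct Hb as [y [Hy Hb]]. apply in_map_iff in Hb. destruct Hb as [j' [Hj _]].
    inversion Hj; subst. contradiction. Qed.

Lemma vtx_eqb_spec u v : vtx_eqb u v = true <-> u = v.
Proof. destruct u, v; simpl; split; intros H; try discriminate; try congruence; auto.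
  apply andb_true_iff in H. destruct H as [H1 H2]. apply Nat.eqb_eq in H1, H2. subst; auto.
  inversion H; subst. rewrite !Nat.eqb_refl; auto. Qed.
Lemma vtx_eqb_refl u : vtx_eqb u u = true. Proof. apply vtx_eqb_spec; auto. Qed.

Lemma pt_0 lam i : pt lam i 0 = VO. Proof. reflexivity. Qed.
Lemma pt_len lam i : (0 < len lam i)%nat -> pt lam i (len lam i) = VD.
Proof. intros H. unfold pt. destruct (len lam i); [lia|]. simpl. rewrite Nat.eqb_refl; auto. Qed.
Lemma pt_mid lam i j : (0 < j)%nat -> (j < len lam i)%nat -> pt lam i j = VI i j.
Proof. intros H1 H2. unfold pt. destruct (j =? 0)%nat eqn:E0. apply Nat.eqb_eq in E0; lia.
  destruct (j =? len lam i)%nat eqn:E; auto. apply Nat.eqb_eq in E; lia. Qed.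

Lemma pt_S lam i j : pt lam i (S j) = if (S j =? len lam i)%nat then VD else VI i (S j).
Proof. reflexivity. Qed.
Lemma inc_O lam i j : incident lam VO (i, j) = (j =? 0)%nat.
Proof. unfold incident, src, tgt; simpl fst; simpl snd. rewrite pt_S.
  destruct j. reflexivity. rewrite pt_S.
  destruct (S j =? len lam i)%nat, (S (S j) =? len lam i)%nat; reflexivity. Qed.
Lemma inc_D lam i j : (j < len lam i)%nat -> incident lam VD (i, j) = (S j =? len lam i)%nat.
Proof. intros H. unfold incident, src, tgt; simpl fst; simpl snd. rewrite pt_S.
  destruct j. destruct (1 =? len lam i)%nat; reflexivity. rewrite pt_S.
  destruct (S j =? len lam i)%nat eqn:E. apply Nat.eqb_eq in E; lia.
  destruct (S (S j) =? len lam i)%nat; reflexivity. Qed.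

Definition UEs lam : Sst := fun s A =>
  match spos s with
  | VI i j =>
      let ne : edge :=
        match slg s with
        | Some (_, l) => if Nat.eqb l j then (i, Nat.pred j) else (i, j)
        | None => (i, j)
        end in
      if memb ne A then [(1, Go ne)] else [(1, Wait)]
  | v =>
      let c := filter (fun e => incident lam v e && memb e A && negb (str s e)) (edges lam) in
      match c with
      | [] => [(1, Wait)]
      | _ => map (fun e => (/ INR (length c), Go e)) c
      end
  end.
Lemma UE_state lam h A : uniform_eulerian lam h A = UEs lam (state lam h) A.
Proof. reflexivity. Qed.

Lemma memb_In e l : memb e l = true <-> In e l.
Proof. unfold memb. rewrite existsb_exists. split.
  - intros [x [Hx He]]. apply edge_eqb_spec in He; subst; auto.
  - intros H; exists e; split; auto; apply edge_eqb_refl. Qed.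

Lemma filter_flat_map {A B} (P : B -> bool) (g : A -> list B) l :
  filter P (flat_map g l) = flat_map (fun x => filter P (g x)) l.
Proof. induction l; simpl; auto. rewrite filter_app, IHl; auto. Qed.

Lemma filter_seq_eq (a : nat) n s : filter (fun j => (j =? a)%nat) (seq s n) = if (s <=? a)%nat && (a <? s + n)%nat then [a] else [].
Proof. revert s; induction n; intros s; cbn [seq filter].
  - destruct (s <=? a)%nat eqn:E1; destruct (a <? s + 0)%nat eqn:E2; auto.
    apply Nat.leb_le in E1; apply Nat.ltb_lt in E2; lia.
  - rewrite IHn. destruct (s =? a)%nat eqn:E.
    + apply Nat.eqb_eq in E; subst.
      replace (S a <=? a)%nat with false by (symmetry; apply Nat.leb_gt; lia).
      replace (a <=? a)%nat with true by (symmetry; apply Nat.leb_le; lia).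
      replace (a <? a + S n)%nat with true by (symmetry; apply Nat.ltb_lt; lia). auto.
    + apply Nat.eqb_neq in E.
      destruct (Nat.leb_spec s a), (Nat.leb_spec (S s) a), (Nat.ltb_spec a (S s + n)), (Nat.ltb_spec a (s + S n)); simpl; auto; lia. Qed.

Definition jv lam (v : bool) (i : nat) : nat := if v then 0%nat else (len lam i - 1)%nat.
Definition Kend lam (v : bool) (dn : nat -> bool) : list edge :=
  flat_map (fun i => if dn i then [] else [(i, jv lam v i)]) (seq 0 (length lam)).
Definition lpos lam := forall i, (i < length lam)%nat -> (0 < len lam i)%nat.
Definition updn (dn : nat -> bool) (l : nat) : nat -> bool := fun x => (x =? l)%nat || dn x.

Inductive ast := AEnd (v : bool) (dn : nat -> bool) | AMid (v : bool) (dn : nat -> bool) (c k : nat).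

Definition rep lam (s : st) (a : ast) : Prop :=
  match a with
  | AEnd v dn => spos s = (if v then VO else VD) /\ forall f, In f (edges lam) -> str s f = dn (fst f)
  | AMid v dn c k => (c < length lam)%nat /\ dn c = false /\ (1 <= k < len lam c)%nat /\
      spos s = VI c (if v then k else len lam c - k) /\
      slg s = Some (c, if v then (k - 1)%nat else (len lam c - k)%nat) /\
      forall f, In f (edges lam) -> str s f = dn (fst f) || ((fst f =? c)%nat && (if v then (snd f <? k)%nat else (len lam c - k <=? snd f)%nat))
  end.

Definition nextE lam (v : bool) (dn : nat -> bool) (l : nat) : ast := if (1 <? len lam l)%nat then AMid v dn l 1 else AEnd (negb v) (updn dn l).
Definition nextM lam (v : bool) (dn : nat -> bool) (c k : nat) : ast := if (S k <? len lam c)%nat then AMid v dn c (S k) else AEnd (negb v) (updn dn c).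
Definition neM lam (v : bool) (c k : nat) : edge := (c, if v then k else (len lam c - k - 1)%nat).

Lemma flat_map_ext_in {A B} (g1 g2 : A -> list B) l : (forall x, In x l -> g1 x = g2 x) -> flat_map g1 l = flat_map g2 l.
Proof. induction l; simpl; intros H; auto. rewrite H, IHl; auto. Qed.
Lemma filter_false {A} (l : list A) : filter (fun _ => false) l = [].
Proof. induction l; simpl; auto. Qed.
Lemma filter_filter' {A} (f g : A -> bool) l : filter f (filter g l) = filter (fun x => g x && f x) l.
Proof. induction l; simpl; auto. destruct (g a); simpl; auto. destruct (f a); simpl; rewrite IHl; auto. Qed.
Lemma sumR_filter {A} (F : A -> R) P l : sumR (map F (filter P l)) = sumR (map (fun x => if P x then F x else 0) l).
Proof. induction l; simpl; auto. destruct (P a); simpl map; rewrite ?sumR_cons, IHl; auto; ring. Qed.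

Lemma Kend_filter lam s v dn : lpos lam -> rep lam s (AEnd v dn) ->
  filter (fun f => incident lam (if v then VO else VD) f && negb (str s f)) (edges lam) = Kend lam v dn.
Proof. intros Hl [_ Htr].
  rewrite (filter_ext_in _ (fun f => incident lam (if v then VO else VD) f && negb (dn (fst f)))).
  2:{ intros f Hf; rewrite Htr; auto. }
  unfold edges, Kend. rewrite filter_flat_map. apply flat_map_ext_in. intros i Hi. apply in_seq in Hi.
  assert (Hli := Hl i ltac:(lia)).
  rewrite filter_map_swap. simpl fst.
  destruct (dn i); simpl negb.
  - rewrite (filter_ext _ (fun _ => false)). rewrite filter_false; auto. intros; apply andb_false_r.
  - rewrite (filter_ext_in _ (fun j => (j =? jv lam v i)%nat)).
    + rewrite filter_seq_eq. unfold jv. destruct v; simpl.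
      * replace (0 <? len lam i)%nat with true by (symmetry; apply Nat.ltb_lt; lia). auto.
      * replace (len lam i - 1 <? len lam i)%nat with true by (symmetry; apply Nat.ltb_lt; lia). auto.
    + intros j Hj. apply in_seq in Hj. rewrite andb_true_r. unfold jv. destruct v.
      * apply inc_O.
      * rewrite inc_D by lia. destruct (Nat.eqb_spec (S j) (len lam i)), (Nat.eqb_spec j (len lam i - 1)); auto; lia. Qed.

Lemma UEs_end lam s v dn A : lpos lam -> rep lam s (AEnd v dn) ->
  UEs lam s A = let c := filter (fun f => memb f A) (Kend lam v dn) in
    match c with [] => [(1, Wait)] | _ => map (fun e => (/ INR (length c), Go e)) c end.
Proof. intros Hl Hr. unfold UEs. pose proof Hr as [Hp _]. rewrite Hp.
  assert (H : filter (fun e => incident lam (if v then VO else VD) e && memb e A && negb (str s e)) (edges lam) =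
              filter (fun f => memb f A) (Kend lam v dn)).
  { rewrite <- (Kend_filter lam s v dn Hl Hr), filter_filter'. apply filter_ext. intros f.
    destruct (incident _ _ f), (memb f A), (str s f); auto. }
  destruct v; simpl; rewrite H; reflexivity. Qed.

Lemma In_Kend lam v dn f : In f (Kend lam v dn) <-> exists i, (i < length lam)%nat /\ dn i = false /\ f = (i, jv lam v i).
Proof. unfold Kend. rewrite in_flat_map. split.
  - intros [i [Hi Hf]]. apply in_seq in Hi. destruct (dn i) eqn:E; [destruct Hf|]. destruct Hf as [<-|[]].
    exists i; repeat split; auto; lia.
  - intros [i [Hi [Hd ->]]]. exists i. split. apply in_seq; lia. rewrite Hd; left; auto. Qed.

Lemma NoDup_Kend lam v dn : NoDup (Kend lam v dn).
Proof. unfold Kend. generalize (seq_NoDup (length lam) 0). generalize (seq 0 (length lam)).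
  induction l as [|x l IH]; intros Hl; simpl. constructor.
  inversion Hl; subst. destruct (dn x); simpl; auto. constructor; auto.
  intros Hin. apply in_flat_map in Hin. destruct Hin as [y [Hy Hb]]. destruct (dn y); [destruct Hb|].
  destruct Hb as [Hb|[]]. inversion Hb; subst; contradiction. Qed.

Lemma incl_Kend lam v dn : lpos lam -> incl (Kend lam v dn) (edges lam).
Proof. intros Hl f Hf. apply In_Kend in Hf. destruct Hf as [i [Hi [_ ->]]]. apply In_edges.
  specialize (Hl i Hi). unfold jv; destruct v; lia. Qed.

Lemma stepS_end lam p G s v dn : lpos lam -> rep lam s (AEnd v dn) -> Kend lam v dn <> [] ->
  stepS lam p (UEs lam) G s = (1 - p) ^ length (Kend lam v dn) * G s +
     piK p (Kend lam v dn) * sumR (map (fun f => G (nxt lam s (Go f))) (Kend lam v dn)).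
Proof. intros Hl Hr Hne. set (K := Kend lam v dn).
  set (F := fun sg : edge -> bool => if (cnt K sg =? 0)%nat then G s else
     sumR (map (fun f => (if sg f then / INR (cnt K sg) else 0) * G (nxt lam s (Go f))) K)).
  transitivity (ExE p (edges lam) (fun _ => false) F).
  - unfold stepS. rewrite <- patterns_ExE. apply sumR_map_ext; intros aw _. f_equal.
    unfold F. cbv beta. rewrite (UEs_end lam s v dn (fst aw) Hl Hr). cbv zeta.
    assert (Hc : filter (fun x => memb x (fst aw) || false) K = filter (fun f => memb f (fst aw)) K).
    { apply filter_ext; intros; apply orb_false_r. }
    unfold cnt. rewrite Hc. fold K.
    destruct (filter (fun f => memb f (fst aw)) K) as [|x c] eqn:E.
    + simpl. unfold sumR; simpl. ring.
    + change (length (x :: c) =? 0)%nat with false. cbv iota. rewrite <- E. rewrite map_map. cbn [fst snd].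
      rewrite sumR_filter. apply sumR_map_ext; intros f _. rewrite orb_false_r.
      destruct (memb f (fst aw)); ring.
  - unfold F. apply ExE_end; auto. apply NoDup_edges. apply NoDup_Kend. apply incl_Kend; auto. Qed.

Ltac bnat := repeat match goal with
  | |- context [Nat.eqb ?a ?b] => destruct (Nat.eqb_spec a b)
  | |- context [Nat.ltb ?a ?b] => destruct (Nat.ltb_spec a b)
  | |- context [Nat.leb ?a ?b] => destruct (Nat.leb_spec a b)
  end; try subst; rewrite ?orb_false_r, ?orb_true_r, ?andb_true_r, ?andb_false_r; simpl; auto; try lia.

Lemma UEs_mid lam s v dn c k A : rep lam s (AMid v dn c k) ->
  UEs lam s A = if memb (neM lam v c k) A then [(1, Go (neM lam v c k))] else [(1, Wait)].
Proof. intros (Hc & Hd & Hk & Hp & Hg & Ht). unfold UEs. rewrite Hp, Hg. unfold neM. destruct v.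
  - replace (k - 1 =? k)%nat with false by (symmetry; apply Nat.eqb_neq; lia). reflexivity.
  - rewrite Nat.eqb_refl. replace (Nat.pred (len lam c - k)) with (len lam c - k - 1)%nat by lia. reflexivity. Qed.

Lemma neM_in lam v dn c k s : rep lam s (AMid v dn c k) -> In (neM lam v c k) (edges lam).
Proof. intros (Hc & Hd & Hk & Hp & Hg & Ht). unfold neM. apply In_edges. destruct v; lia. Qed.

Lemma stepS_mid lam p G s v dn c k : rep lam s (AMid v dn c k) ->
  stepS lam p (UEs lam) G s = p * G (nxt lam s (Go (neM lam v c k))) + (1 - p) * G s.
Proof. intros Hr.
  set (F := fun sg : edge -> bool => if sg (neM lam v c k) then G (nxt lam s (Go (neM lam v c k))) else G s).
  transitivity (ExE p (edges lam) (fun _ => false) F).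
  - unfold stepS. rewrite <- patterns_ExE. apply sumR_map_ext; intros aw _. f_equal.
    unfold F. cbv beta. rewrite (UEs_mid lam s v dn c k (fst aw) Hr). rewrite orb_false_r.
    destruct (memb (neM lam v c k) (fst aw)); unfold sumR; simpl; ring.
  - unfold F. apply ExE_bit; auto. apply NoDup_edges. eapply neM_in; eauto. Qed.

Lemma cross_src lam v e : vtx_eqb v (src lam e) = true -> cross lam v e = tgt lam e.
Proof. intros H; unfold cross; rewrite H; auto. Qed.
Lemma cross_tgt lam v e : vtx_eqb v (src lam e) = false -> vtx_eqb v (tgt lam e) = true -> cross lam v e = src lam e.
Proof. intros H1 H2; unfold cross; rewrite H1, H2; auto. Qed.

Lemma rep_nextE lam s v dn l : lpos lam -> rep lam s (AEnd v dn) -> (l < length lam)%nat -> dn l = false ->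
  rep lam (nxt lam s (Go (l, jv lam v l))) (nextE lam v dn l).
Proof. intros Hl [Hp Ht] Hln Hd. pose proof (Hl l Hln) as Hlen.
  unfold nextE, nxt; simpl spos; simpl slg; simpl str. rewrite Hp.
  unfold jv; destruct v.
  - rewrite cross_src by reflexivity. unfold tgt; simpl.
    destruct (Nat.ltb_spec 1 (len lam l)).
    + rewrite pt_mid by lia. repeat split; auto; try lia.
      intros [a b] Hf. cbn [str]. rewrite Ht by auto. unfold edge_eqb; cbn [fst snd]. bnat.
    + assert (E : len lam l = 1%nat) by lia.
      replace (pt lam l 1) with VD by (rewrite <- (pt_len lam l) by lia; rewrite E; reflexivity).
      split; auto. intros [a b] Hf. cbn [str]. rewrite Ht by auto. apply In_edges in Hf. unfold edge_eqb, updn; cbn [fst snd].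
      bnat.
  - assert (Htg : tgt lam (l, (len lam l - 1)%nat) = VD).
    { unfold tgt; simpl. replace (S (len lam l - 1)) with (len lam l) by lia. apply pt_len; lia. }
    destruct (Nat.ltb_spec 1 (len lam l)).
    + rewrite cross_tgt. 2:{ unfold src; simpl. rewrite pt_mid by lia. reflexivity. } 2:{ rewrite Htg; reflexivity. }
      unfold src; simpl. rewrite pt_mid by lia. repeat split; auto; try lia.
      intros [a b] Hf. cbn [str]. rewrite Ht by auto. apply In_edges in Hf. unfold edge_eqb; cbn [fst snd]. bnat; subst; lia.
    + assert (E : len lam l = 1%nat) by lia.
      rewrite cross_tgt. 2:{ unfold src; simpl. rewrite E. reflexivity. } 2:{ rewrite Htg; reflexivity. }
      unfold src; simpl. rewrite E. simpl. split; auto.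
      intros [a b] Hf. cbn [str]. rewrite Ht by auto. apply In_edges in Hf. unfold edge_eqb, updn; cbn [fst snd]. bnat; subst; lia. Qed.

Lemma rep_nextM lam s v dn c k : rep lam s (AMid v dn c k) ->
  rep lam (nxt lam s (Go (neM lam v c k))) (nextM lam v dn c k).
Proof. intros (Hc & Hd & Hk & Hp & Hg & Ht).
  unfold nextM, nxt, neM; cbn [spos slg str]. rewrite Hp. destruct v.
  - rewrite cross_src. 2:{ unfold src; cbn [fst snd]. rewrite pt_mid by lia. apply vtx_eqb_refl. }
    unfold tgt; cbn [fst snd].
    destruct (Nat.ltb_spec (S k) (len lam c)).
    + rewrite pt_mid by lia. repeat split; cbn [spos slg]; auto; try lia; try (f_equal; f_equal; lia).
      intros [a b] Hf. cbn [str]. rewrite Ht by auto. apply In_edges in Hf. unfold edge_eqb; cbn [fst snd].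
      destruct (dn a); simpl; auto. bnat.
    + assert (E : len lam c = S k) by lia. rewrite <- E, pt_len by lia. split; auto.
      intros [a b] Hf. cbn [str]. rewrite Ht by auto. apply In_edges in Hf. unfold edge_eqb, updn; cbn [fst snd].
      destruct (dn a); simpl; [rewrite ?orb_true_r; auto|]. bnat.
  - assert (Htg : tgt lam (c, (len lam c - k - 1)%nat) = VI c (len lam c - k)).
    { unfold tgt; cbn [fst snd]. replace (S (len lam c - k - 1)) with (len lam c - k)%nat by lia. apply pt_mid; lia. }
    destruct (Nat.ltb_spec (S k) (len lam c)).
    + rewrite cross_tgt. 2:{ unfold src; cbn [fst snd]. rewrite pt_mid by lia. simpl. bnat. }
      2:{ rewrite Htg; apply vtx_eqb_refl. }
      unfold src; cbn [fst snd]. rewrite pt_mid by lia. repeat split; cbn [spos slg]; auto; try lia; try (f_equal; f_equal; lia).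
      f_equal; lia.
      intros [a b] Hf. cbn [str]. rewrite Ht by auto. apply In_edges in Hf. unfold edge_eqb; cbn [fst snd].
      destruct (dn a); simpl; auto. bnat.
    + assert (E : (len lam c - k - 1 = 0)%nat) by lia.
      rewrite cross_tgt. 2:{ unfold src; cbn [fst snd]. rewrite E. reflexivity. } 2:{ rewrite Htg; apply vtx_eqb_refl. }
      unfold src; cbn [fst snd]. rewrite E. split; auto.
      intros [a b] Hf. cbn [str]. rewrite Ht by auto. apply In_edges in Hf. unfold edge_eqb, updn; cbn [fst snd].
      destruct (dn a); simpl; [rewrite ?orb_true_r; auto|]. bnat. all: destruct b; auto; lia. Qed.

Fixpoint rsum (F : nat -> R) (n : nat) : R := match n with O => 0 | S n' => rsum F n' + F n' end.
Fixpoint nsum (F : nat -> nat) (n : nat) : nat := match n with O => 0%nat | S n' => (nsum F n' + F n')%nat end.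

Lemma rsum_ext F G n : (forall i, (i < n)%nat -> F i = G i) -> rsum F n = rsum G n.
Proof. induction n; simpl; intros H; auto. rewrite IHn, H; auto. Qed.
Lemma nsum_ext F G n : (forall i, (i < n)%nat -> F i = G i) -> nsum F n = nsum G n.
Proof. induction n; simpl; intros H; auto. rewrite IHn, H; auto. Qed.
Lemma rsum_plus F G n : rsum (fun i => F i + G i) n = rsum F n + rsum G n.
Proof. induction n; simpl; [ring|rewrite IHn; ring]. Qed.
Lemma rsum_scal c F n : rsum (fun i => c * F i) n = c * rsum F n.
Proof. induction n; simpl; [ring|rewrite IHn; ring]. Qed.
Lemma rsum_const c n : rsum (fun _ => c) n = INR n * c.
Proof. induction n; simpl rsum; [simpl; ring|rewrite IHn, S_INR; ring]. Qed.
Lemma sumR_seq F n : sumR (map F (seq 0 n)) = rsum F n.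
Proof. induction n. reflexivity. rewrite seq_S, map_app, sumR_app, IHn. simpl rsum. simpl map. rewrite sumR_cons, sumR_nil. ring. Qed.
Lemma length_flat_map_seq {B} (g : nat -> list B) n : length (flat_map g (seq 0 n)) = nsum (fun i => length (g i)) n.
Proof. induction n. reflexivity. rewrite seq_S, flat_map_app, length_app, IHn. simpl. rewrite length_app; simpl; lia. Qed.

Lemma rsum_upd F dn l n : (l < n)%nat -> dn l = false ->
  rsum (fun x => if updn dn l x then 0 else F x) n + F l = rsum (fun x => if dn x then 0 else F x) n.
Proof. induction n; intros Hl Hd; [lia|]. simpl. unfold updn at 2.
  destruct (Nat.eq_dec l n) as [->|Hne].
  - rewrite Nat.eqb_refl, Hd. simpl. rewrite (rsum_ext _ (fun x => if dn x then 0 else F x)). ring.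
    intros i Hi. unfold updn. replace (i =? n)%nat with false by (symmetry; apply Nat.eqb_neq; lia). auto.
  - replace (n =? l)%nat with false by (symmetry; apply Nat.eqb_neq; lia). simpl.
    rewrite <- IHn by (auto; lia). ring. Qed.
Lemma nsum_upd F dn l n : (l < n)%nat -> dn l = false ->
  (nsum (fun x => if updn dn l x then 0 else F x) n + F l = nsum (fun x => if dn x then 0 else F x) n)%nat.
Proof. induction n; intros Hl Hd; [lia|]. simpl. unfold updn at 2.
  destruct (Nat.eq_dec l n) as [->|Hne].
  - rewrite Nat.eqb_refl, Hd. simpl. rewrite (nsum_ext _ (fun x => if dn x then 0%nat else F x)). lia.
    intros i Hi. unfold updn. replace (i =? n)%nat with false by (symmetry; apply Nat.eqb_neq; lia). auto.
  - replace (n =? l)%nat with false by (symmetry; apply Nat.eqb_neq; lia). simpl.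
    rewrite <- IHn by (auto; lia). lia. Qed.
Lemma rsum_split F l n : (l < n)%nat -> rsum F n = F l + rsum (fun x => if (x =? l)%nat then 0 else F x) n.
Proof. induction n; intros Hl; [lia|]. simpl.
  destruct (Nat.eq_dec l n) as [->|Hne].
  - rewrite Nat.eqb_refl. rewrite (rsum_ext (fun x => if (x =? n)%nat then 0 else F x) F). ring.
    intros i Hi. replace (i =? n)%nat with false by (symmetry; apply Nat.eqb_neq; lia). auto.
  - replace (n =? l)%nat with false by (symmetry; apply Nat.eqb_neq; lia). rewrite IHn by lia. ring. Qed.

Definition gg (p : R) (k : nat) : R := / (1 - (1 - p) ^ k).
Fixpoint Aval (p : R) (r : nat) : R :=
  match r with O => 0 | S r' => gg p (S r') + INR r' / INR (S r') * Aval p r' end.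
Fixpoint oe (r : nat) : nat * nat := match r with O => (0%nat, 0%nat) | S r' => (S (snd (oe r')), fst (oe r')) end.

Definition rc (lam : list nat) (dn : nat -> bool) : nat := nsum (fun l => if dn l then 0%nat else 1%nat) (length lam).
Definition So (lam : list nat) i0 (dn : nat -> bool) : R := rsum (fun l => if dn l || (l =? i0)%nat then 0 else INR (len lam l) - 1) (length lam).
Definition dv lam i0 j0 (v : bool) : R := if v then INR j0 else INR (len lam i0) - 1 - INR j0.
Definition Vend lam p i0 j0 (v : bool) (dn : nat -> bool) : R :=
  if dn i0 then 0 else
  Aval p (rc lam dn) + So lam i0 dn / (2 * p) +
  (INR (fst (oe (rc lam dn))) * dv lam i0 j0 v + INR (snd (oe (rc lam dn))) * dv lam i0 j0 (negb v)) / (INR (rc lam dn) * p).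
Definition Vmid lam p i0 j0 (v : bool) (dn : nat -> bool) (c k : nat) : R :=
  if dn i0 then 0 else if (c =? i0)%nat then
    (if v then (if (j0 <? k)%nat then 0 else INR (j0 - k + 1) / p)
     else (if (len lam c - k <=? j0)%nat then 0 else INR (len lam c - k - j0) / p))
  else INR (len lam c - k) / p + Vend lam p i0 j0 (negb v) (updn dn c).
Definition Vabs lam p i0 j0 (a : ast) : R :=
  match a with AEnd v dn => Vend lam p i0 j0 v dn | AMid v dn c k => Vmid lam p i0 j0 v dn c k end.
Definition tot (lam : list nat) (dn : nat -> bool) : nat := nsum (fun l => if dn l then 0%nat else len lam l) (length lam).
Definition mu lam (a : ast) : nat := match a with AEnd _ dn => tot lam dn | AMid _ dn _ k => (tot lam dn - k)%nat end.

Lemma tot_upd lam dn l : (l < length lam)%nat -> dn l = false -> (tot lam (updn dn l) + len lam l = tot lam dn)%nat.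
Proof. intros; unfold tot; apply nsum_upd; auto. Qed.

Lemma mu_nextE lam v dn l : lpos lam -> (l < length lam)%nat -> dn l = false -> (mu lam (nextE lam v dn l) < mu lam (AEnd v dn))%nat.
Proof. intros Hl Hln Hd. pose proof (tot_upd lam dn l Hln Hd). pose proof (Hl l Hln).
  unfold nextE. destruct (Nat.ltb_spec 1 (len lam l)); simpl; lia. Qed.

Lemma mu_nextM lam s v dn c k : rep lam s (AMid v dn c k) -> (mu lam (nextM lam v dn c k) < mu lam (AMid v dn c k))%nat.
Proof. intros (Hc & Hd & Hk & _). pose proof (tot_upd lam dn c Hc Hd).
  unfold nextM. destruct (Nat.ltb_spec (S k) (len lam c)); simpl; lia. Qed.

Lemma V_trav lam p i0 j0 s a : rep lam s a -> In (i0, j0) (edges lam) -> str s (i0, j0) = true -> Vabs lam p i0 j0 a = 0.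
Proof. intros Hr He Hs. destruct a as [v dn|v dn c k]; simpl in *.
  - destruct Hr as [_ Ht]. rewrite Ht in Hs by auto. simpl in Hs. unfold Vend. rewrite Hs. auto.
  - destruct Hr as (_ & _ & _ & _ & _ & Ht). rewrite Ht in Hs by auto. simpl in Hs. unfold Vmid.
    destruct (dn i0); auto. simpl in Hs. apply andb_true_iff in Hs. destruct Hs as [H1 H2].
    apply Nat.eqb_eq in H1. subst. rewrite Nat.eqb_refl. destruct v; rewrite H2; auto. Qed.

Lemma INR_S_sub a b : (b < a)%nat -> INR (a - b) = INR (a - S b) + 1.
Proof. intros H. replace (a - b)%nat with (S (a - S b)) by lia. apply S_INR. Qed.

Lemma mid_identity lam p i0 j0 s v dn c k : 0 < p -> rep lam s (AMid v dn c k) -> In (i0, j0) (edges lam) ->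
  str s (i0, j0) = false -> Vmid lam p i0 j0 v dn c k = / p + Vabs lam p i0 j0 (nextM lam v dn c k).
Proof. intros Hp Hr He Hs. pose proof Hr as (Hc & Hd & Hk & _ & _ & Ht).
  rewrite Ht in Hs by auto. simpl in Hs. apply orb_false_iff in Hs. destruct Hs as [Hd0 Hs].
  apply In_edges in He. destruct He as [Hi0 Hj0].
  unfold Vmid, nextM. rewrite Hd0. destruct (Nat.eqb_spec c i0) as [->|Hne].
  - rewrite Nat.eqb_refl in Hs. simpl in Hs. destruct v.
    + rewrite Hs. destruct (Nat.ltb_spec (S k) (len lam i0)); simpl.
      * unfold Vmid; rewrite Hd0, Nat.eqb_refl. apply Nat.ltb_ge in Hs. destruct (Nat.ltb_spec j0 (S k)).
        -- replace j0 with k by lia. replace (k - k + 1)%nat with 1%nat by lia. simpl. field; lra.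
        -- replace (j0 - k + 1)%nat with (j0 + 1 - k)%nat by lia.
           rewrite (INR_S_sub (j0 + 1) k) by lia. replace (j0 + 1 - S k)%nat with (j0 - S k + 1)%nat by lia. field; lra.
      * unfold Vend, updn. rewrite Nat.eqb_refl. simpl. apply Nat.ltb_ge in Hs.
        replace (j0 - k + 1)%nat with 1%nat by lia. simpl. field; lra.
    + rewrite Hs. apply Nat.leb_gt in Hs. destruct (Nat.ltb_spec (S k) (len lam i0)); simpl.
      * unfold Vmid; rewrite Hd0, Nat.eqb_refl. destruct (Nat.leb_spec (len lam i0 - S k) j0).
        -- replace (len lam i0 - k - j0)%nat with 1%nat by lia. simpl. field; lra.
        -- replace (len lam i0 - k - j0)%nat with (len lam i0 - j0 - k)%nat by lia.
           rewrite (INR_S_sub (len lam i0 - j0) k) by lia.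
           replace (len lam i0 - j0 - S k)%nat with (len lam i0 - S k - j0)%nat by lia. field; lra.
      * unfold Vend, updn. rewrite Nat.eqb_refl. simpl.
        replace (len lam i0 - k - j0)%nat with 1%nat by lia. simpl. field; lra.
  - destruct (Nat.ltb_spec (S k) (len lam c)); simpl.
    + unfold Vmid. rewrite Hd0. replace (c =? i0)%nat with false by (symmetry; apply Nat.eqb_neq; auto).
      rewrite (INR_S_sub (len lam c) k) by lia. field; lra.
    + replace (len lam c - k)%nat with 1%nat by lia. simpl. field; lra. Qed.

Lemma sum_Kend lam v dn F : sumR (map F (Kend lam v dn)) = rsum (fun i => if dn i then 0 else F (i, jv lam v i)) (length lam).
Proof. unfold Kend. rewrite sumR_flat_map, sumR_seq. apply rsum_ext; intros i _.
  destruct (dn i); simpl map; rewrite ?sumR_cons, ?sumR_nil; ring. Qed.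
Lemma len_Kend lam v dn : length (Kend lam v dn) = rc lam dn.
Proof. unfold Kend, rc. rewrite length_flat_map_seq. apply nsum_ext; intros i _. destruct (dn i); auto. Qed.

Lemma rsum_INR F n : rsum (fun i => INR (F i)) n = INR (nsum F n).
Proof. induction n; simpl rsum; simpl nsum; auto. rewrite IHn, plus_INR; auto. Qed.

Lemma rc_upd lam dn l : (l < length lam)%nat -> dn l = false -> (rc lam (updn dn l) + 1 = rc lam dn)%nat.
Proof. intros; unfold rc. apply (nsum_upd (fun _ => 1%nat)); auto. Qed.
Lemma So_upd lam i0 dn l : (l < length lam)%nat -> dn l = false -> l <> i0 ->
  So lam i0 (updn dn l) + (INR (len lam l) - 1) = So lam i0 dn.
Proof. intros Hl Hd Hn. unfold So.
  rewrite (rsum_ext (fun l0 => if updn dn l l0 || (l0 =? i0)%nat then 0 else INR (len lam l0) - 1)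
     (fun x => if updn dn l x then 0 else (if (x =? i0)%nat then 0 else INR (len lam x) - 1))).
  rewrite (rsum_ext (fun l0 => if dn l0 || (l0 =? i0)%nat then 0 else INR (len lam l0) - 1)
     (fun x => if dn x then 0 else (if (x =? i0)%nat then 0 else INR (len lam x) - 1))).
  replace (INR (len lam l) - 1) with (if (l =? i0)%nat then 0 else INR (len lam l) - 1) at 1.
  apply (rsum_upd (fun x => if (x =? i0)%nat then 0 else INR (len lam x) - 1)); auto.
  replace (l =? i0)%nat with false by (symmetry; apply Nat.eqb_neq; auto). auto.
  intros i _; destruct (dn i); auto. intros i _; destruct (updn dn l i); auto. Qed.

Lemma others_cnt lam i0 dn : (i0 < length lam)%nat -> dn i0 = false ->
  rsum (fun l => if dn l || (l =? i0)%nat then 0 else 1) (length lam) = INR (rc lam dn) - 1.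
Proof. intros Hi Hd. unfold rc. rewrite <- rsum_INR.
  rewrite (rsum_split (fun i => INR (if dn i then 0%nat else 1%nat)) i0) by auto. rewrite Hd. simpl INR.
  match goal with |- _ = 1 + ?X - 1 => replace (1 + X - 1) with X by ring end.
  apply rsum_ext; intros i _. destruct (dn i), (i =? i0)%nat; simpl; auto. Qed.

Lemma Vnext lam p i0 j0 v dn l : 0 < p -> lpos lam -> (l < length lam)%nat -> dn l = false -> dn i0 = false ->
  (j0 < len lam i0)%nat ->
  Vabs lam p i0 j0 (nextE lam v dn l) =
  if (l =? i0)%nat then dv lam i0 j0 v / p else (INR (len lam l) - 1) / p + Vend lam p i0 j0 (negb v) (updn dn l).
Proof. intros Hp Hl Hln Hd Hd0 Hj0. pose proof (Hl l Hln) as Hlen. unfold nextE.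
  destruct (Nat.ltb_spec 1 (len lam l)); simpl.
  - unfold Vmid. rewrite Hd0. destruct (Nat.eqb_spec l i0) as [->|Hne].
    + unfold dv. destruct v.
      * destruct (Nat.ltb_spec j0 1). replace j0 with 0%nat by lia. simpl. field; lra.
        replace (j0 - 1 + 1)%nat with j0 by lia. auto.
      * destruct (Nat.leb_spec (len lam i0 - 1) j0).
        replace j0 with (len lam i0 - 1)%nat by lia. rewrite minus_INR by lia. simpl. field; lra.
        rewrite !minus_INR by lia. simpl. field; lra.
    + rewrite minus_INR by lia. simpl; auto.
  - assert (E : len lam l = 1%nat) by lia. destruct (Nat.eqb_spec l i0) as [->|Hne].
    + unfold Vend, updn, dv. rewrite Nat.eqb_refl. simpl. rewrite E in *. destruct v; replace j0 with 0%nat by lia; simpl; field; lra.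
    + rewrite E. simpl. field; lra. Qed.

Lemma alg_end (t r p A' So d db no ne C : R) : t <> 0 -> r <> 0 -> p <> 0 -> (r - 1) * C = (no * db + ne * d) / p ->
  (1 + (t / r) * (d / p + So / (2 * p) + (r - 1) * (A' + So / (2 * p) + C))) / t =
  / t + (r - 1) / r * A' + So / (2 * p) + ((ne + 1) * d + no * db) / (r * p).
Proof. intros Ht Hr Hp H.
  replace ((r - 1) * (A' + So / (2 * p) + C)) with ((r - 1) * A' + (r - 1) * (So / (2 * p)) + (r - 1) * C) by ring.
  rewrite H. field. auto. Qed.

Lemma qpow_lt p n : 0 < p <= 1 -> (0 < n)%nat -> 0 < 1 - (1 - p) ^ n.
Proof. intros Hp Hn. pose proof (pow_lt_1_compat (1 - p) n ltac:(lra) Hn). lra. Qed.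

Lemma end_identity lam p i0 j0 v dn : 0 < p <= 1 -> lpos lam -> (i0 < length lam)%nat -> (j0 < len lam i0)%nat -> dn i0 = false ->
  (1 + piK p (Kend lam v dn) * sumR (map (fun f => Vabs lam p i0 j0 (nextE lam v dn (fst f))) (Kend lam v dn))) /
    (1 - (1 - p) ^ (rc lam dn)) = Vend lam p i0 j0 v dn.
Proof. intros Hp Hl Hi0 Hj0 Hd0.
  pose proof (rc_upd lam dn i0 Hi0 Hd0) as Hrc.
  set (r := rc lam dn) in *.
  destruct r as [|R'] eqn:Er; [lia|].
  assert (Hrc' : forall l, (l < length lam)%nat -> dn l = false -> rc lam (updn dn l) = R').
  { intros l Hln Hdl. pose proof (rc_upd lam dn l Hln Hdl). fold r in H. rewrite Er in H. lia. }
  assert (Hpi : piK p (Kend lam v dn) = (1 - (1 - p) ^ S R') / INR (S R')).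
  { assert (HK : INR (length (Kend lam v dn)) * piK p (Kend lam v dn) = 1 - (1 - p) ^ length (Kend lam v dn)).
    { apply (piK_eq p (edges lam) (fun _ => false)); auto. apply NoDup_edges. apply NoDup_Kend. apply incl_Kend; auto.
      intro E. assert (length (Kend lam v dn) = 0%nat) by (rewrite E; auto). rewrite len_Kend in H. fold r in H. lia. }
    rewrite len_Kend in HK. fold r in HK. rewrite Er in HK. rewrite <- HK. field. apply not_0_INR; lia. }
  set (C := (INR (fst (oe R')) * dv lam i0 j0 (negb v) + INR (snd (oe R')) * dv lam i0 j0 v) / (INR R' * p)).
  set (So0 := So lam i0 dn).
  assert (HZ : sumR (map (fun f => Vabs lam p i0 j0 (nextE lam v dn (fst f))) (Kend lam v dn)) =
     dv lam i0 j0 v / p + ((INR (S R') - 1) * (Aval p R' + So0 / (2 * p) + C) + So0 / (2 * p))).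
  { rewrite sum_Kend. cbn [fst].
    rewrite (rsum_ext _ (fun i => if dn i then 0 else if (i =? i0)%nat then dv lam i0 j0 v / p else
        (INR (len lam i) - 1) / p + Vend lam p i0 j0 (negb v) (updn dn i))).
    2:{ intros i Hi. destruct (dn i) eqn:Edi; auto. rewrite Vnext; auto; lra. }
    rewrite (rsum_split _ i0 _ Hi0). rewrite Hd0, Nat.eqb_refl. f_equal.
    rewrite (rsum_ext _ (fun x => (Aval p R' + So0 / (2 * p) + C) * (if dn x || (x =? i0)%nat then 0 else 1) +
        / (2 * p) * (if dn x || (x =? i0)%nat then 0 else INR (len lam x) - 1))).
    - rewrite rsum_plus, rsum_scal, rsum_scal, others_cnt; auto. fold r. rewrite Er. unfold So0, So. field. lra.
    - intros i Hi. destruct (Nat.eqb_spec i i0) as [->|Hne].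
      + rewrite orb_true_r. ring.
      + rewrite orb_false_r. destruct (dn i) eqn:Edi. ring.
        unfold Vend. unfold updn at 1. replace (i0 =? i)%nat with false by (symmetry; apply Nat.eqb_neq; auto). rewrite Hd0. simpl orb.
        rewrite Hrc' by auto. pose proof (So_upd lam i0 dn i Hi Edi Hne) as HS. fold So0 in HS.
        replace (So lam i0 (updn dn i)) with (So0 - (INR (len lam i) - 1)) by lra.
        rewrite negb_involutive. fold C. field. lra. }
  rewrite HZ, Hpi. unfold Vend. rewrite Hd0. fold r. rewrite Er. fold So0.
  assert (HC : (INR (S R') - 1) * C = (INR (fst (oe R')) * dv lam i0 j0 (negb v) + INR (snd (oe R')) * dv lam i0 j0 v) / p).
  { rewrite S_INR. unfold C. destruct R' as [|R''].
    - simpl. unfold Rdiv. ring.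
    - field. split. lra. apply not_0_INR; lia. }
  replace ((INR (S R') - 1) * (Aval p R' + So0 / (2 * p) + C)) with
    ((INR (S R') - 1) * (Aval p R' + So0 / (2 * p)) + (INR (S R') - 1) * C) by ring.
  rewrite HC. cbn [Aval oe fst snd]. unfold gg. rewrite !S_INR.
  assert (Ht : 0 < 1 - (1 - p) ^ S R') by (apply qpow_lt; auto; lia).
  field. repeat split; try lra. pose proof (pos_INR R'); lra. Qed.

Lemma Un_cv_const c : Un_cv (fun _ => c) c.
Proof. intros eps He. exists 0%nat. intros. unfold R_dist. rewrite Rminus_diag, Rabs_R0; auto. Qed.
Lemma Un_cv_ext u v l : (forall n, u n = v n) -> Un_cv u l -> Un_cv v l.
Proof. intros H Hu eps He. destruct (Hu eps He) as [N HN]. exists N. intros n Hn. rewrite <- H; auto. Qed.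
Lemma Un_cv_scal c u l : Un_cv u l -> Un_cv (fun n => c * u n) (c * l).
Proof. intros H. apply (CV_mult (fun _ => c) u); auto. apply Un_cv_const. Qed.
Lemma Un_cv_sumR {A} (u : nat -> A -> R) (w : A -> R) K : (forall f, In f K -> Un_cv (fun n => u n f) (w f)) ->
  Un_cv (fun n => sumR (map (u n) K)) (sumR (map w K)).
Proof. induction K as [|a K IH]; intros H; simpl map. apply Un_cv_const.
  apply (Un_cv_ext (fun n => u n a + sumR (map (u n) K))). intros; rewrite sumR_cons; auto.
  rewrite sumR_cons. apply CV_plus. apply H; left; auto. apply IH. intros; apply H; right; auto. Qed.

Lemma cv_rec (x z : nat -> R) a zl : 0 <= a < 1 -> Un_cv z zl -> (forall M, x (S M) = a * x M + z M) ->
  Un_cv x (zl / (1 - a)).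
Proof. intros Ha Hz Hx eps He. set (L := zl / (1 - a)).
  assert (HL : a * L + zl = L) by (unfold L; field; lra).
  destruct (Hz (eps * (1 - a) / 2)) as [N1 HN1]. { apply Rmult_lt_0_compat; [apply Rmult_lt_0_compat|]; lra. }
  set (D := Rabs (x N1 - L)).
  assert (Hk : forall k, Rabs (x (N1 + k)%nat - L) <= a ^ k * D + eps / 2).
  { induction k. rewrite Nat.add_0_r; simpl. unfold D. pose proof (Rabs_pos (x N1 - L)); lra.
    rewrite Nat.add_succ_r, Hx. specialize (HN1 (N1 + k)%nat ltac:(lia)). unfold R_dist in HN1.
    replace (a * x (N1 + k)%nat + z (N1 + k)%nat - L) with (a * (x (N1 + k)%nat - L) + (z (N1 + k)%nat - zl)) by (rewrite <- HL at 2; ring).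
    eapply Rle_trans. apply Rabs_triang. rewrite Rabs_mult, (Rabs_right a) by lra.
    apply Rle_trans with (a * (a ^ k * D + eps / 2) + eps * (1 - a) / 2).
    apply Rplus_le_compat. apply Rmult_le_compat_l; lra. lra. simpl. lra. }
  destruct (pow_lt_1_zero a ltac:(rewrite Rabs_right; lra) (eps / (2 * (D + 1)))) as [N2 HN2].
  { unfold D; pose proof (Rabs_pos (x N1 - L)). apply Rdiv_lt_0_compat; lra. }
  exists (N1 + N2)%nat. intros n Hn. unfold R_dist.
  replace n with (N1 + (n - N1))%nat by lia. eapply Rle_lt_trans. apply Hk.
  specialize (HN2 (n - N1)%nat ltac:(lia)). rewrite Rabs_right in HN2 by (apply Rle_ge, pow_le; lra).
  assert (HD : 0 <= D) by apply Rabs_pos.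
  assert (a ^ (n - N1) * D <= eps / (2 * (D + 1)) * D) by (apply Rmult_le_compat_r; lra).
  assert (eps / (2 * (D + 1)) * D < eps / 2).
  { unfold Rdiv. rewrite Rinv_mult. apply Rlt_le_trans with (eps * / 2 * 1).
    replace (eps * (/ 2 * / (D + 1)) * D) with (eps * / 2 * (D / (D + 1))) by (field; lra).
    apply Rmult_lt_compat_l. lra. apply Rmult_lt_reg_r with (D + 1). lra. unfold Rdiv. rewrite Rmult_assoc, Rinv_l; lra. lra. }
  lra. Qed.

Theorem conv lam p i0 j0 (ss : Sst) : 0 < p <= 1 -> lpos lam -> In (i0, j0) (edges lam) ->
  (forall s a A, rep lam s a -> ss s A = UEs lam s A) ->
  forall N a s, (mu lam a < N)%nat -> rep lam s a -> Un_cv (fun M => SN lam p ss (i0, j0) M s) (Vabs lam p i0 j0 a).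
Proof. intros Hp Hl He Hss N. induction N; intros a s Hmu Hr. lia.
  destruct (str s (i0, j0)) eqn:Hs.
  - rewrite (V_trav lam p i0 j0 s a) by auto.
    apply (Un_cv_ext (fun _ => 0)). intros; rewrite SN_trav; auto. apply Un_cv_const.
  - pose proof He as He'. apply In_edges in He'. destruct He' as [Hi0 Hj0].
    destruct a as [v dn | v dn c k].
    + pose proof Hr as [Hpos Ht]. rewrite Ht in Hs by auto. simpl in Hs.
      set (K := Kend lam v dn).
      assert (HK : K <> []).
      { intro E. assert (In (i0, jv lam v i0) K). apply In_Kend. exists i0; auto. rewrite E in H; auto. }
      assert (Hrec : forall M, SN lam p ss (i0, j0) (S M) s = (1 - p) ^ rc lam dn * SN lam p ss (i0, j0) M s +
          (1 + piK p K * sumR (map (fun f => SN lam p ss (i0, j0) M (nxt lam s (Go f))) K))).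
      { intros M. rewrite SN_rec. rewrite Ht by auto. simpl fst. rewrite Hs.
        rewrite (stepS_ext_sg _ _ _ (UEs lam)) by (intros; apply (Hss s (AEnd v dn)); auto).
        rewrite (stepS_end lam p _ s v dn) by auto. fold K. unfold K. rewrite len_Kend. ring. }
      simpl Vabs. rewrite <- (end_identity lam p i0 j0 v dn) by auto. fold K.
      assert (Hr1 : (0 < rc lam dn)%nat) by (pose proof (rc_upd lam dn i0 Hi0 Hs); lia).
      apply (cv_rec _ (fun M => 1 + piK p K * sumR (map (fun f => SN lam p ss (i0, j0) M (nxt lam s (Go f))) K))).
      { pose proof (qpow_lt p (rc lam dn) Hp Hr1). pose proof (pow_le (1 - p) (rc lam dn) ltac:(lra)). lra. }
      2:{ exact Hrec. }
      apply CV_plus. apply Un_cv_const. apply Un_cv_scal.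
      apply (Un_cv_sumR (fun M f => SN lam p ss (i0, j0) M (nxt lam s (Go f))) (fun f => Vabs lam p i0 j0 (nextE lam v dn (fst f)))).
      intros f Hf. apply In_Kend in Hf. destruct Hf as [l [Hln [Hdl ->]]]. simpl fst.
      apply IHN. pose proof (mu_nextE lam v dn l Hl Hln Hdl). cbn [mu] in *. lia.
      apply rep_nextE; auto.
    + pose proof Hr as (Hc & Hd & Hk & _ & _ & Ht).
      set (s' := nxt lam s (Go (neM lam v c k))).
      assert (Hrec : forall M, SN lam p ss (i0, j0) (S M) s = (1 - p) * SN lam p ss (i0, j0) M s +
          (1 + p * SN lam p ss (i0, j0) M s')).
      { intros M. rewrite SN_rec, Hs.
        rewrite (stepS_ext_sg _ _ _ (UEs lam)) by (intros; apply (Hss s (AMid v dn c k)); auto).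
        rewrite (stepS_mid lam p _ s v dn c k) by auto. fold s'. ring. }
      simpl Vabs. rewrite (mid_identity lam p i0 j0 s v dn c k) by (auto; lra).
      replace (/ p + Vabs lam p i0 j0 (nextM lam v dn c k)) with ((1 + p * Vabs lam p i0 j0 (nextM lam v dn c k)) / (1 - (1 - p))) by (field; lra).
      apply (cv_rec _ (fun M => 1 + p * SN lam p ss (i0, j0) M s')). lra. 2:{ exact Hrec. }
      apply CV_plus. apply Un_cv_const. apply Un_cv_scal.
      apply IHN. pose proof (mu_nextM lam s v dn c k Hr). cbn [mu] in *. lia.
      apply rep_nextM; auto. Qed.

Lemma oe_double m : oe (2 * m) = (m, m).
Proof. induction m. reflexivity. replace (2 * S m)%nat with (S (S (2 * m))) by lia. cbn [oe]. rewrite IHm. reflexivity. Qed.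

Lemma Phi_S p m : (1 <= m)%nat -> Phi p (S m) =
  / 2 * / (1 - (1 - p) ^ (2 * S m)) + (/ 2 - / (2 * INR (S m))) * / (1 - (1 - p) ^ (2 * S m - 1))
  - / (2 * INR (S m)) * (sumR (map (fun k => / (1 - (1 - p) ^ k)) (seq 1 (2 * (S m - 1)))) + / p)
  + (INR (S m) - 1) / INR (S m) * Phi p m.
Proof. intros H. destruct m; [lia|]. reflexivity. Qed.

Lemma sumR_seq1 F n : sumR (map F (seq 1 n)) = rsum (fun i => F (S i)) n.
Proof. rewrite <- seq_shift, map_map. apply sumR_seq. Qed.

Lemma gg1 p : 0 < p -> gg p 1 = / p.
Proof. intros; unfold gg. f_equal. simpl; ring. Qed.

Lemma gg_pos p k : 0 < p <= 1 -> (0 < k)%nat -> 0 < 1 - (1 - p) ^ k.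
Proof. apply qpow_lt. Qed.

Lemma Aval_Phi p m : 0 < p <= 1 -> (1 <= m)%nat ->
  Aval p (2 * m) = (rsum (fun i => gg p (S i)) (2 * m) + / p) / 2 + Phi p m.
Proof. intros Hp Hm. induction m as [|m IH]; [lia|].
  destruct (Nat.eq_dec m 0) as [->|Hm0].
  - simpl Aval. simpl rsum. simpl Phi. rewrite gg1 by lra. unfold gg. simpl INR.
    pose proof (gg_pos p 2 Hp ltac:(lia)). field. lra.
  - rewrite Phi_S by lia. replace (2 * S m)%nat with (S (S (2 * m))) by lia.
    replace (S (S (2 * m)) - 1)%nat with (S (2 * m)) by lia. replace (2 * (S m - 1))%nat with (2 * m)%nat by lia.
    rewrite sumR_seq1. cbn [Aval rsum]. rewrite IH by lia. unfold gg.
    set (X := rsum (fun i => / (1 - (1 - p) ^ S i)) (2 * m)).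
    pose proof (gg_pos p (S (S (2 * m))) Hp ltac:(lia)). pose proof (gg_pos p (S (2 * m)) Hp ltac:(lia)).
    rewrite !S_INR, mult_INR. simpl INR. field. pose proof (pos_INR m). repeat split; lra. Qed.

Lemma Vend_start lam p i0 j0 m : 0 < p <= 1 -> (1 <= m)%nat -> length lam = (2 * m)%nat ->
  (i0 < length lam)%nat -> (j0 < len lam i0)%nat ->
  Vend lam p i0 j0 true (fun _ => false) = (theta p lam + / p) / 2 + Phi p m.
Proof. intros Hp Hm Hlen Hi0 Hj0. unfold Vend. simpl negb.
  assert (Hrc : rc lam (fun _ => false) = (2 * m)%nat).
  { unfold rc. rewrite Hlen. clear. induction (2 * m)%nat; simpl; lia. }
  rewrite Hrc, oe_double. simpl fst; simpl snd.
  unfold theta. rewrite sumR_seq, rsum_plus.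
  rewrite (rsum_ext (fun i => (INR (len lam i) - 1) / p) (fun i => / p * (INR (len lam i) - 1))) by (intros; unfold Rdiv; ring).
  rewrite rsum_scal. rewrite (rsum_split (fun i => INR (len lam i) - 1) i0) by auto.
  unfold So. simpl orb. rewrite Hlen. rewrite Aval_Phi by auto. unfold gg, dv.
  set (Y := rsum (fun x : nat => if (x =? i0)%nat then 0 else INR (len lam x) - 1) (2 * m)).
  rewrite mult_INR. simpl INR. field. pose proof (lt_0_INR m ltac:(lia)). lra. Qed.

Definition sgV lam : Sst := fun s A =>
  let o := UEs lam s A in
  if forallb (fun wm => legal lam (spos s) A (snd wm)) o then o else [(1, Wait)].
Definition sgH lam : strategy := fun h A => sgV lam (state lam h) A.

Lemma UEs_legal lam s a A : lpos lam -> rep lam s a -> forallb (fun wm => legal lam (spos s) A (snd wm)) (UEs lam s A) = true.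
Proof. intros Hl Hr. destruct a as [v dn|v dn c k].
  - rewrite (UEs_end lam s v dn A Hl Hr). cbv zeta.
    destruct (filter (fun f => memb f A) (Kend lam v dn)) as [|x c] eqn:E. reflexivity.
    apply forallb_forall. intros wm Hwm. rewrite <- E in Hwm. apply in_map_iff in Hwm.
    destruct Hwm as [f [<- Hf]]. simpl. apply filter_In in Hf. destruct Hf as [Hf HA].
    rewrite HA. pose proof Hf as Hf'. apply (incl_Kend lam v dn Hl) in Hf'. apply memb_In in Hf'. rewrite Hf'. simpl.
    destruct Hr as [Hp _]. rewrite Hp. apply In_Kend in Hf. destruct Hf as [i [Hi [_ ->]]]. unfold jv.
    destruct v. rewrite inc_O; auto. pose proof (Hl i Hi). rewrite inc_D by lia. apply Nat.eqb_eq; lia.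
  - rewrite (UEs_mid lam s v dn c k A Hr). destruct (memb (neM lam v c k) A) eqn:E; [|reflexivity].
    simpl. rewrite E. pose proof (neM_in lam v dn c k s Hr) as Hin. apply memb_In in Hin. rewrite Hin. simpl.
    destruct Hr as (Hc & Hd & Hk & Hp & _). rewrite Hp. unfold incident, neM. destruct v.
    + unfold src; simpl fst; simpl snd. rewrite pt_mid by lia. rewrite vtx_eqb_refl. reflexivity.
    + unfold tgt; simpl fst; simpl snd. replace (S (len lam c - k - 1)) with (len lam c - k)%nat by lia.
      rewrite (pt_mid lam c (len lam c - k)) by lia. rewrite vtx_eqb_refl, orb_true_r. reflexivity. Qed.

Lemma sgV_rep lam s a A : lpos lam -> rep lam s a -> sgV lam s A = UEs lam s A.
Proof. intros Hl Hr. unfold sgV. cbv zeta. rewrite (UEs_legal lam s a A Hl Hr). reflexivity. Qed.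

Lemma UEs_sum lam s A : sumR (map fst (UEs lam s A)) = 1 /\ forall wm, In wm (UEs lam s A) -> 0 <= fst wm.
Proof. unfold UEs. destruct (spos s) as [| |i j].
  3:{ destruct (memb _ A); simpl; split; try (unfold sumR; simpl; ring); intros wm [<-|[]]; simpl; lra. }
  all: destruct (filter _ (edges lam)) as [|x c] eqn:E; [simpl; split; [unfold sumR; simpl; ring| intros wm [<-|[]]; simpl; lra]|].
  all: split; [rewrite map_map; cbn [fst]; rewrite sum_const; field; apply not_0_INR; simpl; lia
             | intros wm Hwm; apply in_map_iff in Hwm; destruct Hwm as [f [<- _]]; cbn [fst]; left; apply Rinv_0_lt_compat, lt_0_INR; simpl; lia]. Qed.

Lemma sgH_valid lam : valid_strategy lam (sgH lam).
Proof. intros h A. unfold sgH, sgV. cbv zeta. unfold state at 1 2; simpl spos.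
  destruct (forallb _ _) eqn:E.
  - destruct (UEs_sum lam (state lam h) A) as [H1 H2]. split; auto.
    intros wm Hwm. split. apply H2; auto. rewrite forallb_forall in E. apply (E wm Hwm).
  - split. intros wm [<-|[]]; simpl; split; auto; lra. unfold sumR; simpl; ring. Qed.

Lemma expt lam p i0 j0 (ss : Sst) (sg : strategy) : 0 < p <= 1 -> lpos lam -> In (i0, j0) (edges lam) ->
  (forall h A, sg h A = ss (state lam h) A) -> (forall s a A, rep lam s a -> ss s A = UEs lam s A) ->
  exp_time lam p sg (i0, j0) (Vend lam p i0 j0 true (fun _ => false)).
Proof. intros Hp Hl He Hsg Hss. unfold exp_time, infinite_sum. intros eps Heps.
  assert (Hr : rep lam (state lam []) (AEnd true (fun _ => false))) by (split; auto).
  pose proof (conv lam p i0 j0 ss Hp Hl He Hss (S (mu lam (AEnd true (fun _ => false)))) (AEnd true (fun _ => false)) (state lam []) (Nat.lt_succ_diag_r _) Hr) as Hcv.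
  destruct (Hcv eps Heps) as [N HN]. exists N. intros n Hn.
  rewrite (sum_tail_SN lam p sg ss (i0, j0) Hsg n). apply HN. lia. Qed.

Lemma sumR_nonneg {A} (f : A -> R) l : (forall x, In x l -> 0 <= f x) -> 0 <= sumR (map f l).
Proof. induction l; simpl map; intros H. rewrite sumR_nil; lra. rewrite sumR_cons.
  pose proof (H a (or_introl eq_refl)). pose proof (IHl (fun x Hx => H x (or_intror Hx))). lra. Qed.

Lemma patterns_nonneg p L : 0 <= p <= 1 -> forall aw, In aw (patterns p L) -> 0 <= snd aw.
Proof. intros Hp. induction L; simpl; intros aw Haw. destruct Haw as [<-|[]]; simpl; lra.
  apply in_app_or in Haw. destruct Haw as [H|H]; apply in_map_iff in H; destruct H as [x [<- Hx]]; simpl;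
  apply Rmult_le_pos; try lra; apply IHL; auto. Qed.

Lemma dist_nonneg lam p sg : 0 <= p <= 1 -> valid_strategy lam sg -> forall t hw, In hw (Defs.dist lam p sg t) -> 0 <= snd hw.
Proof. intros Hp Hv t. induction t; simpl; intros hw Hhw. destruct Hhw as [<-|[]]; simpl; lra.
  apply in_flat_map in Hhw. destruct Hhw as [x [Hx Hhw]]. apply in_flat_map in Hhw. destruct Hhw as [aw [Haw Hhw]].
  apply in_map_iff in Hhw. destruct Hhw as [wm [<- Hwm]]. simpl.
  destruct (Hv (fst x) (fst aw)) as [H _]. destruct (H wm Hwm) as [Hw _].
  apply Rmult_le_pos; auto. apply Rmult_le_pos. apply IHt; auto. eapply patterns_nonneg; eauto. Qed.

Lemma exp_nonneg lam p sg e E : 0 <= p <= 1 -> valid_strategy lam sg -> exp_time lam p sg e E -> 0 <= E.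
Proof. intros Hp Hv HE. assert (Hs : forall n, 0 <= sum_f_R0 (Defs.tail lam p sg e) n).
  { assert (Ht : forall t, 0 <= Defs.tail lam p sg e t).
    { intros t. unfold Defs.tail. apply sumR_nonneg. intros hw Hhw. destruct (traversed _ _); [lra|].
      eapply dist_nonneg; eauto. }
    induction n; simpl; auto. pose proof (Ht (S n)); lra. }
  destruct (Rle_or_lt 0 E) as [H|H]; auto. exfalso.
  destruct (HE (- E) ltac:(lra)) as [N HN]. specialize (HN N (Nat.le_refl N)). specialize (Hs N).
  unfold R_dist in HN. rewrite Rabs_right in HN by lra. lra. Qed.

Theorem mainTheorem13 (m : nat) (lam : list nat) (p : R) :
  (1 <= m)%nat ->
  length lam = (2 * m)%nat ->
  (forall l, In l lam -> (0 < l)%nat) ->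
  0 < p <= 1 ->
  (forall e, In e (edges lam) ->
     exp_time lam p (uniform_eulerian lam) e ((theta p lam + / p) / 2 + Phi p m))
  /\ val lam p <= (theta p lam + / p) / 2 + Phi p m.
Proof. intros Hm Hlen Hpos Hp.
  assert (Hl : lpos lam).
  { intros i Hi. apply Hpos. unfold len. apply nth_In; auto. }
  assert (Hexp : forall (ss : Sst) (sg : strategy), (forall h A, sg h A = ss (state lam h) A) ->
     (forall s a A, rep lam s a -> ss s A = UEs lam s A) ->
     forall e, In e (edges lam) -> exp_time lam p sg e ((theta p lam + / p) / 2 + Phi p m)).
  { intros ss sg Hsg Hss [i0 j0] He. pose proof He as He'. apply In_edges in He'.
    rewrite <- (Vend_start lam p i0 j0 m) by (tauto || lia). apply (expt lam p i0 j0 ss); auto. }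
  split.
  - apply (Hexp (UEs lam)); auto; try (intros; apply UE_state).
  - set (V0 := (theta p lam + / p) / 2 + Phi p m).
    assert (HG : guarantees lam p V0).
    { exists (sgH lam). split. apply sgH_valid. intros e He. exists V0. split; [|lra].
      apply (Hexp (sgV lam)); auto. intros s a A Hr; apply (sgV_rep lam s a A); auto. }
    assert (Hlow : forall M, guarantees lam p M -> 0 <= M).
    { intros M [sg [Hv HM]]. assert (He0 : In (0%nat, 0%nat) (edges lam)).
      { apply In_edges. split. lia. apply Hl; lia. }
      destruct (HM _ He0) as [E [HE HEM]]. pose proof (exp_nonneg lam p sg _ E ltac:(lra) Hv HE). lra. }
    assert (Hex : exists v, is_glb (guarantees lam p) v).
    { destruct (completeness (fun y => guarantees lam p (- y))) as [u [Hu1 Hu2]].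
      - exists 0. intros y Hy. pose proof (Hlow _ Hy). lra.
      - exists (- V0). rewrite Ropp_involutive; auto.
      - exists (- u). split.
        + intros x Hx. assert (- x <= u) by (apply Hu1; rewrite Ropp_involutive; auto). lra.
        + intros y Hy. assert (u <= - y). { apply Hu2. intros z Hz. pose proof (Hy _ Hz). lra. } lra. }
    pose proof (epsilon_spec (inhabits 0) (is_glb (guarantees lam p)) Hex) as [H1 _].
    unfold val. apply H1. exact HG. Qed.
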